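(* Let $\mathcal{A}$ be a Desargues affine plane, let $\ell_1=\ell^{OI}$ and $\ell_2$ be lines of $\mathcal{A}$ ($O\neq I$), and let $P_P:\ell_1\to\ell_2$ be a parallel projection. Equip $\ell_1$ with the skew field structure with zero $O$ and unit $I$, and $\ell_2$ with the skew field structure with zero $P_P(O)$ and unit $P_P(I)$. Then for all $A,B,C\in\ell_1$ with $B\neq C$, \[ P_P(r(A,B;C))=r(P_P(A),P_P(B);P_P(C)), \] where the ratio on the left is computed in $\ell_1$ and the ratio on the right in $\ell_2$.
   Context: A Desargues affine plane is an incidence structure of points and lines in which any two distinct points lie on exactly one line, through a point not on a line $\ell$ there is exactly one line disjoint from $\ell$ (Playfair), there exist three non-collinear points, and Desargues' axiom holds: if $A,B,C,A',B',C'$ are points such that the pairwise distinct lines $AA',BB',CC'$ are either all parallel or all pass through one point, and $AB\parallel A'B'$, $BC\parallel B'C'$ (with $AB\neq A'B'$, $BC\neq B'C'$, $A\ne C$, $A'\ne C'$), then $AC\parallel A'C'$. Skew field on a line: for distinct points $O,I$ and points $A,B$ on the line $\ell^{OI}$, addition is defined by: choose a point $B_1\notin\ell^{OI}$; let $P_1$ be the intersection of the line through $B_1$ parallel to $\ell^{OI}$ with the line through $A$ parallel to $OB_1$; then $A+B$ is the intersection of $\ell^{OI}$ with the line through $P_1$ parallel to $BB_1$. Multiplication is defined by: choose $B_1\notin\ell^{OI}$; let $P_1$ be the intersection of the line through $A$ parallel to $IB_1$ with the line $OB_1$; then $A\cdot B$ is the intersection of $\ell^{OI}$ with the line through $P_1$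 parallel to $BB_1$. These operations do not depend on the choice of $B_1$ and make $(\ell^{OI},+,\cdot)$ a skew field with zero $O$ and unit $I$; the same construction applies to any line with any chosen pair of distinct points as zero and unit. $-X$ and $X^{-1}$ denote additive and multiplicative inverses, $X-Y=X+(-Y)$. Ratio of three points on such a line: $r(A,B;C)=(B-C)^{-1}(A-C)$ for $B\neq C$. A parallel projection between lines $\ell_1,\ell_2$ is a map $P_P:\ell_1\to\ell_2$ such that for all $A,B\in\ell_1$ the lines $A\,P_P(A)$ and $B\,P_P(B)$ are parallel (it is a bijection). *)

(* Defs.v *)
From Stdlib Require Import Classical ClassicalEpsilon.

Set Implicit Arguments.

Section Plane.
Variables (Pt Ln : Type) (inc : Pt -> Ln -> Prop).

Definition par (l m : Ln) : Prop :=
  l = m \/ (forall X, ~ (inc X l /\ inc X m)).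

Record DesarguesPlane : Prop := {
  dp_line_exists : forall A B, A <> B -> exists l, inc A l /\ inc B l;
  dp_line_unique : forall A B l m, A <> B ->
      inc A l -> inc B l -> inc A m -> inc B m -> l = m;
  dp_playfair : forall A l, ~ inc A l ->
      exists m, (inc A m /\ (forall X, ~ (inc X m /\ inc X l))) /\
        (forall m', inc A m' -> (forall X, ~ (inc X m' /\ inc X l)) -> m' = m);
  dp_noncollinear : exists A B C : Pt,
      ~ (exists l, inc A l /\ inc B l /\ inc C l);
  dp_desargues : forall (A B C A' B' C' : Pt) (a b c : Ln),
      A <> A' -> B <> B' -> C <> C' ->
      inc A a -> inc A' a -> inc B b -> inc B' b -> inc C c -> inc C' c ->
      a <> b -> b <> c -> a <> c ->
      ((par a b /\ par b c /\ par a c) \/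
       (exists Z, inc Z a /\ inc Z b /\ inc Z c)) ->
      forall lAB lA'B' lBC lB'C' lAC lA'C' : Ln,
      A <> B -> A' <> B' -> B <> C -> B' <> C' -> A <> C -> A' <> C' ->
      inc A lAB -> inc B lAB -> inc A' lA'B' -> inc B' lA'B' ->
      inc B lBC -> inc C lBC -> inc B' lB'C' -> inc C' lB'C' ->
      inc A lAC -> inc C lAC -> inc A' lA'C' -> inc C' lA'C' ->
      par lAB lA'B' -> lAB <> lA'B' -> par lBC lB'C' -> lBC <> lB'C' ->
      par lAC lA'C'
}.

Definition pick (d : Pt) (Q : Pt -> Prop) : Pt :=
  match excluded_middle_informative (exists x, Q x) with
  | left h => proj1_sig (constructive_indefinite_description _ h)
  | right _ => d
  end.

(* Addition construction on line l with zero O: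
   choose B1 not on l; P1 = (line through B1 parallel to l) /\
   (line through A parallel to O B1); A+B = l /\ (line through P1
   parallel to B B1). *)
Definition is_sum (l : Ln) (O A B X : Pt) : Prop :=
  exists B1 P1 : Pt, ~ inc B1 l /\
    (exists m, inc B1 m /\ par m l /\ inc P1 m) /\
    (exists n m, inc O n /\ inc B1 n /\ inc A m /\ par m n /\ inc P1 m) /\
    (exists n m, inc B n /\ inc B1 n /\ inc P1 m /\ par m n /\ inc X m) /\
    inc X l.

(* Multiplication construction on line l with zero O and unit I:
   choose B1 not on l; P1 = (line through A parallel to I B1) /\ (O B1);
   A*B = l /\ (line through P1 parallel to B B1). *)
Definition is_prod (l : Ln) (O I A B X : Pt) : Prop :=
  exists B1 P1 : Pt, ~ inc B1 l /\
    (exists n m, inc I n /\ inc B1 n /\ inc A m /\ par m n /\ inc P1 m) /\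
    (exists n, inc O n /\ inc B1 n /\ inc P1 n) /\
    (exists n m, inc B n /\ inc B1 n /\ inc P1 m /\ par m n /\ inc X m) /\
    inc X l.

Definition sadd (l : Ln) (O A B : Pt) : Pt := pick O (is_sum l O A B).
Definition smul (l : Ln) (O I A B : Pt) : Pt := pick O (is_prod l O I A B).
Definition sopp (l : Ln) (O A : Pt) : Pt :=
  pick O (fun Y => inc Y l /\ sadd l O A Y = O).
Definition sinv (l : Ln) (O I A : Pt) : Pt :=
  pick O (fun Y => inc Y l /\ smul l O I A Y = I).
Definition ssub (l : Ln) (O A B : Pt) : Pt := sadd l O A (sopp l O B).

Definition ratio (l : Ln) (O I A B C : Pt) : Pt :=
  smul l O I (sinv l O I (ssub l O B C)) (ssub l O A C).

Definition parallel_projection (l1 l2 : Ln) (f : Pt -> Pt) : Prop :=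
  (forall A, inc A l1 -> inc (f A) l2) /\
  exists d : Ln, ~ par d l1 /\
    forall A, inc A l1 -> exists m, inc A m /\ inc (f A) m /\ par m d.

End Plane.

(* Main.v *)
Require Import Defs.
From Stdlib Require Import Classical ClassicalEpsilon.

Section G.
Variables (Pt Ln : Type) (inc : Pt -> Ln -> Prop).
Hypothesis HA : DesarguesPlane inc.

Local Notation pa := (par inc).

Lemma luniq A B l m : A <> B -> inc A l -> inc B l -> inc A m -> inc B m -> l = m.
Proof. intros; eapply (dp_line_unique HA); eauto. Qed.

Lemma par_refl l : pa l l.
Proof. left; reflexivity. Qed.

Lemma par_sym l m : pa l m -> pa m l.
Proof. intros [->|H]; [left; auto|right; intros X [H1 H2]; apply (H X); tauto]. Qed.

Lemma par_trans l m k : pa l m -> pa m k -> pa l k.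
Proof.
  intros [->|H1]; auto. intros [->|H2]; [right; auto|].
  destruct (classic (l = k)) as [->|Hne]; [apply par_refl|].
  right. intros X [Xl Xk].
  assert (Xm : ~ inc X m) by (intro; apply (H1 X); tauto).
  destruct (dp_playfair HA X m Xm) as [m0 [[Hm0 Hd] Hu]].
  apply Hne. transitivity m0.
  apply Hu; [exact Xl| exact H1].
  symmetry; apply Hu; [exact Xk| intros Y [Y1 Y2]; apply (H2 Y); tauto].
Qed.

Lemma par_inc_eq l m P : pa l m -> inc P l -> inc P m -> l = m.
Proof. intros [->|H] H1 H2; auto. exfalso; apply (H P); tauto. Qed.

Lemma par_uniq P m m' l : inc P m -> inc P m' -> pa m l -> pa m' l -> m = m'.
Proof. intros. apply (par_inc_eq m m' P); auto. eapply par_trans; eauto. apply par_sym; auto. Qed.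

Lemma ex_par P l : exists m, inc P m /\ pa m l.
Proof.
  destruct (classic (inc P l)) as [H|H]. exists l; split; auto; apply par_refl.
  destruct (dp_playfair HA P l H) as [m [[H1 H2] _]]. exists m; split; auto. right; auto.
Qed.

Lemma meet l m : ~ pa l m -> exists P, inc P l /\ inc P m.
Proof.
  intros H. apply NNPP; intro H'. apply H. right. intros X HX. apply H'; eauto.
Qed.

Lemma meet_uniq l m P Q : l <> m -> inc P l -> inc P m -> inc Q l -> inc Q m -> P = Q.
Proof. intros. apply NNPP; intro. apply H. eapply luniq; eauto. Qed.

Lemma ex_off l : exists P, ~ inc P l.
Proof.
  destruct (dp_noncollinear HA) as (X & Y & Z & Hn).
  destruct (classic (inc X l)); [|eauto].
  destruct (classic (inc Y l)); [|eauto].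
  destruct (classic (inc Z l)); [|eauto].
  exfalso; apply Hn; eauto.
Qed.

Lemma ex_line A B : A <> B -> exists l, inc A l /\ inc B l.
Proof. apply (dp_line_exists HA). Qed.

Lemma neq_pt A B l : inc A l -> ~ inc B l -> A <> B.
Proof. intros H1 H2 ->; auto. Qed.

Lemma neq_ln P l m : inc P l -> ~ inc P m -> l <> m.
Proof. intros H1 H2 ->; auto. Qed.

Lemma par_disj l m P : pa l m -> l <> m -> inc P l -> ~ inc P m.
Proof. intros [->|H] Hne H1 H2; auto. apply (H P); auto. Qed.

Lemma npar_share l m P : l <> m -> inc P l -> inc P m -> ~ pa l m.
Proof. intros Hne H1 H2 Hp. apply Hne. eapply par_inc_eq; eauto. Qed.

Lemma npar_trans l m l' m' : ~ pa l m -> pa l' l -> pa m' m -> ~ pa l' m'.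
Proof.
  intros H H1 H2 H3. apply H. eapply par_trans. apply par_sym; eauto.
  eapply par_trans; eauto.
Qed.

Lemma npar_sym l m : ~ pa l m -> ~ pa m l.
Proof. intros H H'; apply H, par_sym, H'. Qed.


Definition SC l O A B B1 P1 X m n k n2 k2 : Prop :=
  ~ inc B1 l /\ inc B1 m /\ pa m l /\ inc P1 m /\
  inc O n /\ inc B1 n /\ inc A k /\ pa k n /\ inc P1 k /\
  inc B n2 /\ inc B1 n2 /\ inc P1 k2 /\ pa k2 n2 /\ inc X k2 /\ inc X l.

Lemma is_sum_SC l O A B X :
  is_sum inc l O A B X <-> exists B1 P1 m n k n2 k2, SC l O A B B1 P1 X m n k n2 k2.
Proof.
  unfold SC, is_sum; split.
  - intros (B1 & P1 & H1 & (m & ? & ? & ?) & (n & k & ? & ? & ? & ? & ?) &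
            (n2 & k2 & ? & ? & ? & ? & ?) & ?).
    exists B1, P1, m, n, k, n2, k2; tauto.
  - intros (B1 & P1 & m & n & k & n2 & k2 & H).
    exists B1, P1; intuition eauto 10.
Qed.

Ltac scd H := let a := fresh "HB1" in let b := fresh "Hm" in let c := fresh "Hml" in
  let d := fresh "HPm" in let e := fresh "HOn" in let f := fresh "HBn" in
  let g := fresh "HAk" in let h := fresh "Hkn" in let i := fresh "HPk" in
  let j := fresh "HBn2" in let k := fresh "HB1n2" in let l := fresh "HPk2" in
  let m := fresh "Hk2" in let n := fresh "HXk2" in let o := fresh "HXl" in
  destruct H as (a & b & c & d & e & f & g & h & i & j & k & l & m & n & o).

Lemma sum_P1B1 l O A B B1 P1 X m n k n2 k2 :
  inc O l -> inc A l -> SC l O A B B1 P1 X m n k n2 k2 -> P1 = B1 -> A = O.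
Proof.
  intros HO HA' S E; subst P1; scd S.
  assert (k = n) by (eapply par_inc_eq with (P := B1); eauto). subst k.
  eapply meet_uniq with (l := n) (m := l); eauto. eapply neq_ln with (P := B1); eauto.
Qed.

Lemma sum_A0 l O A B B1 P1 X m n k n2 k2 :
  inc O l -> inc B l -> SC l O A B B1 P1 X m n k n2 k2 -> A = O -> X = B.
Proof.
  intros HO HB S E; subst A; scd S.
  assert (k = n) by (eapply par_inc_eq with (P := O); eauto). subst k.
  assert (Hml' : m <> l) by (eapply neq_ln with (P := B1); eauto).
  assert (HOm : ~ inc O m) by (eapply par_disj with (l := l); eauto; apply par_sym; auto).
  assert (P1 = B1) by (eapply meet_uniq with (l := n) (m := m); eauto; eapply neq_ln with (P := O); eauto).
  subst P1.
  assert (k2 = n2) by (eapply par_inc_eq with (P := B1); eauto). subst k2.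
  eapply meet_uniq with (l := n2) (m := l); eauto. eapply neq_ln with (P := B1); eauto.
Qed.

Lemma sum_XB l O A B B1 P1 X m n k n2 k2 :
  inc O l -> inc A l -> inc B l -> SC l O A B B1 P1 X m n k n2 k2 -> X = B -> A = O.
Proof.
  intros HO HA' HB S E. eapply sum_P1B1; eauto. subst X. scd S.
  assert (k2 = n2) by (eapply par_inc_eq with (P := B); eauto). subst k2.
  assert (Hml' : m <> l) by (eapply neq_ln with (P := B1); eauto).
  assert (HBm : ~ inc B m) by (eapply par_disj with (l := l); eauto; apply par_sym; auto).
  eapply meet_uniq with (l := n2) (m := m); eauto. eapply neq_ln with (P := B); eauto.
Qed.

Lemma sum_B0 l O A B B1 P1 X m n k n2 k2 :
  inc O l -> inc A l -> SC l O A B B1 P1 X m n k n2 k2 -> B = O -> X = A.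
Proof.
  intros HO HA' S E; subst B; scd S.
  assert (HOB : O <> B1) by (eapply neq_pt with (l := l); eauto).
  assert (n2 = n) by (eapply luniq with (A := O) (B := B1); eauto). subst n2.
  assert (k2 = k) by (eapply par_uniq with (P := P1); eauto). subst k2.
  assert (k <> l).
  { intro; subst k. apply HB1. assert (l = n) by (eapply par_inc_eq with (P := O); eauto). subst; auto. }
  eapply meet_uniq with (l := k) (m := l); eauto.
Qed.

Lemma sum_ex l O A B B1 : inc O l -> inc A l -> inc B l -> ~ inc B1 l ->
  exists P1 X m n k n2 k2, SC l O A B B1 P1 X m n k n2 k2.
Proof.
  intros HO HA' HB HB1.
  destruct (ex_par B1 l) as [m [Hm Hml]].
  destruct (ex_line O B1) as [n [HOn HBn]]. eapply neq_pt; eauto.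
  destruct (ex_par A n) as [k [HAk Hkn]].
  assert (Hnl : ~ pa n l) by (eapply npar_share with (P := O); eauto; eapply neq_ln with (P := B1); eauto).
  destruct (meet k m) as [P1 [HPk HPm]].
  { apply (npar_trans n l k m); auto. }
  destruct (ex_line B B1) as [n2 [HBn2 HB1n2]]. eapply neq_pt; eauto.
  destruct (ex_par P1 n2) as [k2 [HPk2 Hk2]].
  destruct (meet k2 l) as [X [HXk2 HXl]].
  { apply (npar_trans n2 l k2 l); [| exact Hk2 | apply par_refl].
    apply (npar_share n2 l B); auto. eapply neq_ln with (P := B1); eauto. }
  exists P1, X, m, n, k, n2, k2; unfold SC; tauto.
Qed.


Lemma pd1 m l Q P : pa m l -> inc Q m -> ~ inc Q l -> inc P m -> ~ inc P l.
Proof. intros H1 H2 H3 H4. eapply par_disj; eauto. eapply neq_ln with (P := Q); eauto. Qed.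

Lemma pd2 m l Q P : pa m l -> inc Q m -> ~ inc Q l -> inc P l -> ~ inc P m.
Proof. intros H1 H2 H3 H4. eapply par_disj with (l := l); eauto. apply par_sym; auto.
  intro; subst; auto. Qed.

Lemma desarg A B C A' B' C' a b c lAB lA'B' lBC lB'C' lAC lA'C' :
  A <> A' -> B <> B' -> C <> C' ->
  inc A a -> inc A' a -> inc B b -> inc B' b -> inc C c -> inc C' c ->
  a <> b -> b <> c -> a <> c ->
  (pa a b /\ pa b c /\ pa a c \/ exists Z, inc Z a /\ inc Z b /\ inc Z c) ->
  A <> B -> A' <> B' -> B <> C -> B' <> C' -> A <> C -> A' <> C' ->
  inc A lAB -> inc B lAB -> inc A' lA'B' -> inc B' lA'B' ->
  inc B lBC -> inc C lBC -> inc B' lB'C' -> inc C' lB'C' ->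
  inc A lAC -> inc C lAC -> inc A' lA'C' -> inc C' lA'C' ->
  pa lAB lA'B' -> lAB <> lA'B' -> pa lBC lB'C' -> lBC <> lB'C' ->
  pa lAC lA'C'.
Proof.
  intros H1 H2 H3 H4 H5 H6 H7 H8 H9 H10 H11 H12 H13 H14 H15 H16 H17 H18 H19
    H20 H21 H22 H23 H24 H25 H26 H27 H28 H29 H30 H31 H32 H33 H34 H35.
  exact (@dp_desargues Pt Ln inc HA A B C A' B' C' a b c H1 H2 H3 H4 H5 H6 H7 H8 H9 H10
    H11 H12 H13 lAB lA'B' lBC lB'C' lAC lA'C' H14 H15 H16 H17 H18 H19
    H20 H21 H22 H23 H24 H25 H26 H27 H28 H29 H30 H31 H32 H33 H34 H35).
Qed.

Lemma sum_gen l O A B B1 P1 X m1 n1 k1 n1' k1' C1 Q1 Y m2 n2 k2 n2' k2' :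
 inc O l -> inc A l -> inc B l -> A <> O ->
 SC l O A B B1 P1 X m1 n1 k1 n1' k1' -> SC l O A B C1 Q1 Y m2 n2 k2 n2' k2' ->
 ~ inc C1 m1 -> X = Y.
Proof.
  intros HO HA' HB HAO S1 S2 HC1.
  assert (HXB : X <> B) by (intro; apply HAO; eapply (sum_XB l O A B B1 P1 X m1 n1 k1 n1' k1'); eauto).
  assert (HBP : B1 <> P1) by (intro; apply HAO; eapply (sum_P1B1 l O A B B1 P1 X m1 n1 k1 n1' k1'); eauto).
  assert (HCQ : C1 <> Q1) by (intro; apply HAO; eapply (sum_P1B1 l O A B C1 Q1 Y m2 n2 k2 n2' k2'); eauto).
  scd S1. scd S2.
  assert (HP1l : ~ inc P1 l) by (apply (pd1 m1 l B1 P1); auto).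
  assert (HQ1l : ~ inc Q1 l) by (apply (pd1 m2 l C1 Q1); auto).
  assert (Hm1l : m1 <> l) by (eapply neq_ln with (P := B1); eauto).
  assert (Hm2l : m2 <> l) by (eapply neq_ln with (P := C1); eauto).
  assert (Hm12 : m1 <> m2) by (intro; subst; auto).
  assert (Hpm12 : pa m1 m2) by (eapply par_trans; eauto; apply par_sym; auto).
  assert (HBC : B1 <> C1) by (intro; subst; auto).
  assert (HPQ : P1 <> Q1).
  { intro; subst Q1. apply HC1. assert (m1 = m2) by (eapply par_inc_eq with (P := P1); eauto).
    subst; auto. }
  assert (HAn1 : ~ inc A n1).
  { intro. apply HAO. eapply meet_uniq with (l := n1) (m := l); eauto.
    eapply neq_ln with (P := B1); eauto. }
  assert (HAn2 : ~ inc A n2).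
  { intro. apply HAO. eapply meet_uniq with (l := n2) (m := l); eauto.
    eapply neq_ln with (P := C1); eauto. }
  destruct (ex_line B1 C1 HBC) as [g [Hg1 Hg2]].
  destruct (ex_line P1 Q1 HPQ) as [g' [Hg1' Hg2']].
  assert (Hgg : pa g g').
  { apply (desarg B1 O C1 P1 A Q1 m1 l m2 n1 k1 n2 k2 g g'); auto.
    all: try (eapply neq_pt with (l := l); eauto; fail).
    all: try (apply not_eq_sym; eapply neq_pt with (l := l); eauto; fail).
    all: try (apply par_sym; auto; fail).
    - left; split; [|split]; auto. apply par_sym; auto.
    - intro; subst; auto.
    - intro; subst; auto. }
  assert (HBB1 : B <> B1) by (eapply neq_pt with (l := l); eauto).
  assert (HBC1 : B <> C1) by (eapply neq_pt with (l := l); eauto).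
  assert (HXQ : X <> Q1) by (eapply neq_pt with (l := l); eauto).
  assert (HXP : X <> P1) by (eapply neq_pt with (l := l); eauto).
  destruct (ex_line B C1 HBC1) as [h [Hh1 Hh2]].
  destruct (ex_line X Q1 HXQ) as [h' [Hh1' Hh2']].
  assert (Hhh : pa h h').
  { apply (desarg B B1 C1 X P1 Q1 l m1 m2 n1' k1' g g' h h'); auto.
    all: try (apply par_sym; auto; fail).
    - left; split; [|split]; auto. apply par_sym; auto. eapply par_trans; eauto.
      apply par_sym; auto.
    - intro; subst k1'. apply HBP. eapply meet_uniq with (l := n1') (m := m1); eauto.
      eapply neq_ln with (P := B); eauto. eapply pd2 with (Q := B1) (l := l); eauto.
    - intro; subst g'. apply HC1.
      assert (g = m1) by (eapply luniq with (A := B1) (B := P1); eauto). subst; auto. }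
  assert (n2' = h) by (eapply luniq with (A := B) (B := C1); eauto). subst n2'.
  assert (k2' = h') by (apply (par_uniq Q1 k2' h' h); auto; apply par_sym; auto).
  subst k2'.
  eapply meet_uniq with (l := h') (m := l); eauto.
  eapply neq_ln with (P := Q1); eauto.
Qed.

Lemma off_par3 l m Z1 Y1 Y2 Y3 : pa l m -> l <> m -> inc Z1 m -> inc Y1 l -> inc Y2 l ->
  inc Y3 l -> Y1 <> Y2 -> Y1 <> Y3 -> Y2 <> Y3 -> exists D, ~ inc D l /\ ~ inc D m.
Proof.
  intros Hp Hne HZ1 H1 H2 H3 N12 N13 N23.
  assert (HZl : ~ inc Z1 l) by (apply (par_disj m l Z1); auto; apply par_sym; auto).
  assert (HY1m : ~ inc Y1 m) by (apply (par_disj l m Y1); auto).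
  assert (HY2m : ~ inc Y2 m) by (apply (par_disj l m Y2); auto).
  assert (HY3m : ~ inc Y3 m) by (apply (par_disj l m Y3); auto).
  destruct (ex_line Y1 Z1) as [g [Hg1 Hg2]]. intro; subst; auto.
  assert (Hgm : ~ pa g m) by (apply (npar_share g m Z1); auto; intro; subst; auto).
  destruct (ex_par Y2 g) as [g2 [Hg21 Hg22]].
  destruct (meet g2 m) as [Z2 [HZ21 HZ22]].
  { apply (npar_trans g m g2 m); auto; apply par_refl. }
  assert (HZ12 : Z1 <> Z2).
  { intro; subst Z2. assert (g2 = g) by (apply (par_inc_eq g2 g Z1); auto). subst g2.
    apply N12. apply (meet_uniq g l); auto. intro; subst; auto. }
  assert (HZ2l : ~ inc Z2 l) by (apply (par_disj m l Z2); auto; apply par_sym; auto).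
  destruct (ex_line Y2 Z1) as [h2 [Hh21 Hh22]]. intro; subst; auto.
  destruct (ex_line Y3 Z1) as [h3 [Hh31 Hh32]]. intro; subst; auto.
  destruct (ex_line Y1 Z2) as [e [He1 He2]]. intro; subst; auto.
  assert (Hel : e <> l) by (intro; subst; auto).
  assert (Hem : e <> m) by (intro; subst; auto).
  destruct (classic (pa h2 e)) as [P2|P2].
  - destruct (classic (pa h3 e)) as [P3|P3].
    + exfalso. assert (h2 = h3) by (apply (par_uniq Z1 h2 h3 e); auto). subst h3.
      apply N23. apply (meet_uniq h2 l); auto. intro; subst; auto.
    + destruct (meet h3 e P3) as [D [HD1 HD2]]. exists D; split; intro.
      * apply N13. transitivity D.
        symmetry; apply (meet_uniq e l); auto.
        apply (meet_uniq h3 l); auto. intro; subst; auto.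
      * apply HZ12. transitivity D.
        symmetry; apply (meet_uniq h3 m); auto. intro; subst; auto.
        apply (meet_uniq e m); auto.
  - destruct (meet h2 e P2) as [D [HD1 HD2]]. exists D; split; intro.
    + apply N12. transitivity D.
      symmetry; apply (meet_uniq e l); auto.
      apply (meet_uniq h2 l); auto. intro; subst; auto.
    + apply HZ12. transitivity D.
      symmetry; apply (meet_uniq h2 m); auto. intro; subst; auto.
      apply (meet_uniq e m); auto.
Qed.

Lemma off_2 l n O P Q : l <> n -> inc O l -> inc O n -> inc P l -> P <> O -> inc Q n -> Q <> O ->
  exists R, ~ inc R l /\ ~ inc R n.
Proof.
  intros Hne HOl HOn HP HPO HQ HQO.
  assert (Hln : ~ pa l n) by (apply (npar_share l n O); auto).
  destruct (ex_par P n) as [p [Hp1 Hp2]].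
  destruct (ex_par Q l) as [q [Hq1 Hq2]].
  destruct (meet p q) as [R [HR1 HR2]].
  { intro H. apply Hln. eapply par_trans. apply par_sym; eauto.
    eapply par_trans. apply par_sym; eauto. auto. }
  exists R; split; intro HR.
  - assert (HpO : p <> l).
    { intro; subst p. apply Hne. apply (par_inc_eq l n O); auto. }
    assert (R = P) by (apply (meet_uniq p l); auto). subst R.
    assert (q = l) by (apply (par_inc_eq q l P); auto). subst q.
    apply HQO. apply (meet_uniq l n); auto.
  - assert (HqO : q <> n).
    { intro; subst q. apply Hne. symmetry. apply (par_inc_eq n l O); auto. }
    assert (R = Q) by (apply (meet_uniq q n); auto). subst R.
    assert (p = n) by (apply (par_inc_eq p n Q); auto). subst p.
    apply HPO. apply (meet_uniq l n); auto.
Qed.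

Lemma sum_U l O A B B1 P1 X m1 n1 k1 n1' k1' C1 Q1 Y m2 n2 k2 n2' k2' :
 inc O l -> inc A l -> inc B l ->
 SC l O A B B1 P1 X m1 n1 k1 n1' k1' -> SC l O A B C1 Q1 Y m2 n2 k2 n2' k2' -> X = Y.
Proof.
  intros HO HA' HB S1 S2.
  destruct (classic (A = O)) as [HAO|HAO].
  { transitivity B. apply (sum_A0 l O A B B1 P1 X m1 n1 k1 n1' k1'); auto.
    symmetry; apply (sum_A0 l O A B C1 Q1 Y m2 n2 k2 n2' k2'); auto. }
  destruct (classic (inc C1 m1)) as [HC|HC]; [|eapply (sum_gen l O A B B1 P1 X m1 n1 k1 n1' k1' C1 Q1 Y m2 n2 k2 n2' k2'); eauto].
  destruct (classic (exists D, ~ inc D l /\ ~ inc D m1)) as [[D [HDl HDm]]|ND].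
  - destruct (sum_ex l O A B D HO HA' HB HDl) as (R1 & Z & m3 & n3 & k3 & n3' & k3' & S3).
    transitivity Z. eapply (sum_gen l O A B B1 P1 X m1 n1 k1 n1' k1' D R1 Z m3 n3 k3 n3' k3'); eauto.
    symmetry. eapply (sum_gen l O A B C1 Q1 Y m2 n2 k2 n2' k2' D R1 Z m3 n3 k3 n3' k3'); eauto.
    assert (m2 = m1).
    { destruct S1 as (_ & ? & ? & _). destruct S2 as (_ & ? & ? & _).
      apply (par_uniq C1 m2 m1 l); auto. }
    subst; auto.
  - assert (Hm1l : m1 <> l) by (destruct S1 as (? & ? & _); intro; subst; auto).
    assert (Hpm : pa l m1) by (destruct S1 as (_ & _ & ? & _); apply par_sym; auto).
    assert (HB1 : inc B1 m1) by (destruct S1 as (_ & ? & _); auto).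
    assert (Hthird : forall Z, inc Z l -> Z <> O -> Z <> A -> False).
    { intros Z HZ HZO HZA. apply ND.
      apply (off_par3 l m1 B1 O A Z); auto. }
    destruct (classic (B = O)) as [HBO|HBO].
    { transitivity A. apply (sum_B0 l O A B B1 P1 X m1 n1 k1 n1' k1'); auto.
      symmetry; apply (sum_B0 l O A B C1 Q1 Y m2 n2 k2 n2' k2'); auto. }
    assert (B = A) by (apply NNPP; intro; eapply Hthird; eauto).
    assert (HXl : inc X l) by (destruct S1 as (_&_&_&_&_&_&_&_&_&_&_&_&_&_&?); auto).
    assert (HYl : inc Y l) by (destruct S2 as (_&_&_&_&_&_&_&_&_&_&_&_&_&_&?); auto).
    assert (X <> A) by (intro; apply HAO; eapply (sum_XB l O A B B1 P1 X m1 n1 k1 n1' k1'); eauto; congruence).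
    assert (Y <> A) by (intro; apply HAO; eapply (sum_XB l O A B C1 Q1 Y m2 n2 k2 n2' k2'); eauto; congruence).
    transitivity O; [|symmetry]; apply NNPP; intro; eapply Hthird; eauto.
Qed.

Definition PC l O I A B B1 P1 X nI k n nB k2 : Prop :=
  ~ inc B1 l /\ inc I nI /\ inc B1 nI /\ inc A k /\ pa k nI /\ inc P1 k /\
  inc O n /\ inc B1 n /\ inc P1 n /\
  inc B nB /\ inc B1 nB /\ inc P1 k2 /\ pa k2 nB /\ inc X k2 /\ inc X l.

Lemma is_prod_PC l O I A B X :
  is_prod inc l O I A B X <-> exists B1 P1 nI k n nB k2, PC l O I A B B1 P1 X nI k n nB k2.
Proof.
  unfold PC, is_prod; split.
  - intros (B1 & P1 & H1 & (nI & k & ? & ? & ? & ? & ?) & (n & ? & ? & ?) &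
            (nB & k2 & ? & ? & ? & ? & ?) & ?).
    exists B1, P1, nI, k, n, nB, k2; tauto.
  - intros (B1 & P1 & nI & k & n & nB & k2 & H).
    exists B1, P1; intuition eauto 10.
Qed.

Ltac pcd H := let a := fresh "HB1" in let b := fresh "HIn" in let c := fresh "HBnI" in
  let d := fresh "HAk" in let e := fresh "Hkn" in let f := fresh "HPk" in
  let g := fresh "HOn" in let h := fresh "HBn" in let i := fresh "HPn" in
  let j := fresh "HBnB" in let k := fresh "HB1nB" in let l := fresh "HPk2" in
  let m := fresh "Hk2" in let n := fresh "HXk2" in let o := fresh "HXl" in
  destruct H as (a & b & c & d & e & f & g & h & i & j & k & l & m & n & o).

Section Prod.
Variables (l : Ln) (O I : Pt).
Hypotheses (HOl : inc O l) (HIl : inc I l) (HOI : O <> I).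

Lemma pc_basic A B B1 P1 X nI k n nB k2 : PC l O I A B B1 P1 X nI k n nB k2 ->
  n <> l /\ nI <> l /\ n <> nI /\ ~ pa n nI /\ ~ pa nI n.
Proof.
  intros S; pcd S.
  assert (n <> l) by (intro; subst; auto).
  assert (nI <> l) by (intro; subst; auto).
  assert (n <> nI).
  { intro; subst. apply HOI. apply (meet_uniq nI l); auto. }
  assert (~ pa n nI) by (apply (npar_share n nI B1); auto).
  repeat split; auto. apply npar_sym; auto.
Qed.

Lemma prod_A0 A B B1 P1 X nI k n nB k2 : inc B l -> PC l O I A B B1 P1 X nI k n nB k2 ->
  A = O -> X = O.
Proof.
  intros HB S E. destruct (pc_basic _ _ _ _ _ _ _ _ _ _ S) as (H1 & H2 & H3 & H4 & H5).
  subst A; pcd S.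
  assert (k <> n) by (intro; subst; auto).
  assert (P1 = O) by (apply (meet_uniq k n); auto). subst P1.
  assert (k2 <> l).
  { intro; subst k2. apply HB1. assert (l = nB) by (apply (par_inc_eq l nB B); auto).
    subst; auto. }
  apply (meet_uniq k2 l); auto.
Qed.

Lemma prod_B0 A B B1 P1 X nI k n nB k2 : PC l O I A B B1 P1 X nI k n nB k2 ->
  B = O -> X = O.
Proof.
  intros S E. destruct (pc_basic _ _ _ _ _ _ _ _ _ _ S) as (H1 & H2 & H3 & H4 & H5).
  subst B; pcd S.
  assert (nB = n) by (apply (luniq O B1); auto; intro; subst; auto). subst nB.
  assert (k2 = n) by (apply (par_inc_eq k2 n P1); auto). subst k2.
  apply (meet_uniq n l); auto.
Qed.

Lemma prod_AI A B B1 P1 X nI k n nB k2 : inc B l -> PC l O I A B B1 P1 X nI k n nB k2 ->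
  A = I -> X = B.
Proof.
  intros HB S E. destruct (pc_basic _ _ _ _ _ _ _ _ _ _ S) as (H1 & H2 & H3 & H4 & H5).
  subst A; pcd S.
  assert (k = nI) by (apply (par_inc_eq k nI I); auto). subst k.
  assert (P1 = B1) by (apply (meet_uniq nI n); auto). subst P1.
  assert (k2 = nB) by (apply (par_inc_eq k2 nB B1); auto). subst k2.
  apply (meet_uniq nB l); auto. intro; subst; auto.
Qed.

Lemma prod_P1B1 A B B1 P1 X nI k n nB k2 : inc A l -> PC l O I A B B1 P1 X nI k n nB k2 ->
  P1 = B1 -> A = I.
Proof.
  intros HA' S E. destruct (pc_basic _ _ _ _ _ _ _ _ _ _ S) as (H1 & H2 & H3 & H4 & H5).
  subst P1; pcd S.
  assert (k = nI) by (apply (par_inc_eq k nI B1); auto). subst k.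
  apply (meet_uniq nI l); auto.
Qed.

Lemma prod_P1O A B B1 P1 X nI k n nB k2 : inc A l -> PC l O I A B B1 P1 X nI k n nB k2 ->
  P1 = O -> A = O.
Proof.
  intros HA' S E. destruct (pc_basic _ _ _ _ _ _ _ _ _ _ S) as (H1 & H2 & H3 & H4 & H5).
  subst P1; pcd S. apply NNPP; intro HAO.
  assert (k = l) by (apply (luniq A O); auto). subst k.
  apply HB1. assert (l = nI) by (apply (par_inc_eq l nI I); auto). subst; auto.
Qed.

Lemma prod_XB A B B1 P1 X nI k n nB k2 : inc A l -> inc B l -> B <> O ->
  PC l O I A B B1 P1 X nI k n nB k2 -> X = B -> A = I.
Proof.
  intros HA' HB HBO S E. apply (prod_P1B1 A B B1 P1 X nI k n nB k2); auto.
  destruct (pc_basic _ _ _ _ _ _ _ _ _ _ S) as (H1 & H2 & H3 & H4 & H5).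
  subst X; pcd S.
  assert (k2 = nB) by (apply (par_inc_eq k2 nB B); auto). subst k2.
  apply (meet_uniq nB n); auto.
  intro; subst. apply HBO. apply (meet_uniq n l); auto.
Qed.

Lemma prod_X0 A B B1 P1 X nI k n nB k2 : inc A l -> inc B l ->
  PC l O I A B B1 P1 X nI k n nB k2 -> X = O -> A = O \/ B = O.
Proof.
  intros HA' HB S E.
  destruct (classic (P1 = O)) as [E'|E'].
  { left; apply (prod_P1O A B B1 P1 X nI k n nB k2); auto. }
  right. destruct (pc_basic _ _ _ _ _ _ _ _ _ _ S) as (H1 & H2 & H3 & H4 & H5).
  subst X; pcd S.
  assert (k2 = n) by (apply (luniq P1 O); auto). subst k2.
  assert (n = nB) by (apply (par_inc_eq n nB B1); auto). subst nB.
  apply (meet_uniq n l); auto.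
Qed.

Lemma prod_ex A B B1 : inc A l -> inc B l -> ~ inc B1 l ->
  exists P1 X nI k n nB k2, PC l O I A B B1 P1 X nI k n nB k2.
Proof.
  intros HA' HB HB1.
  destruct (ex_line O B1) as [n [HOn HBn]]. intro; subst; auto.
  destruct (ex_line I B1) as [nI [HIn HBnI]]. intro; subst; auto.
  assert (n <> nI).
  { intro; subst. apply HOI. apply (meet_uniq nI l); auto. intro; subst; auto. }
  destruct (ex_par A nI) as [k [HAk Hkn]].
  destruct (meet k n) as [P1 [HPk HPn]].
  { apply (npar_trans nI n k n); auto. apply (npar_share nI n B1); auto. apply par_refl. }
  destruct (ex_line B B1) as [nB [HBnB HB1nB]]. intro; subst; auto.
  destruct (ex_par P1 nB) as [k2 [HPk2 Hk2]].
  destruct (meet k2 l) as [X [HXk2 HXl]].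
  { apply (npar_trans nB l k2 l); auto. apply (npar_share nB l B); auto.
    intro; subst; auto. apply par_refl. }
  exists P1, X, nI, k, n, nB, k2; unfold PC; tauto.
Qed.


Lemma prod_gen A B B1 P1 X nI1 k1 n1 nB1 k21 C1 Q1 Y nI2 k2 n2 nB2 k22 :
  inc A l -> inc B l -> A <> O -> A <> I -> B <> O ->
  PC l O I A B B1 P1 X nI1 k1 n1 nB1 k21 -> PC l O I A B C1 Q1 Y nI2 k2 n2 nB2 k22 ->
  ~ inc C1 n1 -> X = Y.
Proof.
  intros HA' HB HAO HAI HBO S1 S2 HC1.
  destruct (pc_basic _ _ _ _ _ _ _ _ _ _ S1) as (G1 & G2 & G3 & G4 & G5).
  destruct (pc_basic _ _ _ _ _ _ _ _ _ _ S2) as (G1' & G2' & G3' & G4' & G5').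
  assert (HBP : B1 <> P1) by (intro; apply HAI; eapply (prod_P1B1 A B B1 P1 X nI1 k1 n1 nB1 k21); eauto).
  assert (HCQ : C1 <> Q1) by (intro; apply HAI; eapply (prod_P1B1 A B C1 Q1 Y nI2 k2 n2 nB2 k22); eauto).
  assert (HPO : P1 <> O) by (intro; apply HAO; eapply (prod_P1O A B B1 P1 X nI1 k1 n1 nB1 k21); eauto).
  assert (HQO : Q1 <> O) by (intro; apply HAO; eapply (prod_P1O A B C1 Q1 Y nI2 k2 n2 nB2 k22); eauto).
  assert (HXB : X <> B) by (intro; apply HAI; eapply (prod_XB A B B1 P1 X nI1 k1 n1 nB1 k21); eauto).
  pcd S1. pcd S2.
  assert (HP1l : ~ inc P1 l) by (intro; apply HPO; apply (meet_uniq n1 l); auto).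
  assert (HQ1l : ~ inc Q1 l) by (intro; apply HQO; apply (meet_uniq n2 l); auto).
  assert (Hn12 : n1 <> n2) by (intro; subst; auto).
  assert (HBC : B1 <> C1) by (intro; subst; auto).
  assert (HPQ : P1 <> Q1) by (intro; subst; apply HPO; apply (meet_uniq n1 n2); auto).
  assert (HAnI1 : ~ inc A nI1) by (intro; apply HAI; apply (meet_uniq nI1 l); auto).
  assert (HAnI2 : ~ inc A nI2) by (intro; apply HAI; apply (meet_uniq nI2 l); auto).
  destruct (ex_line B1 C1 HBC) as [g [Hg1 Hg2]].
  destruct (ex_line P1 Q1 HPQ) as [g' [Hg1' Hg2']].
  assert (Hgg : pa g g').
  { apply (desarg B1 I C1 P1 A Q1 n1 l n2 nI1 k1 nI2 k2 g g'); auto.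
    all: try (intro; subst; auto; fail).
    all: try (apply par_sym; auto; fail).
    right; exists O; auto. }
  assert (HBB1 : B <> B1) by (intro; subst; auto).
  assert (HBC1 : B <> C1) by (intro; subst; auto).
  assert (HXQ : X <> Q1) by (intro; subst; auto).
  destruct (ex_line B C1 HBC1) as [h [Hh1 Hh2]].
  destruct (ex_line X Q1 HXQ) as [h' [Hh1' Hh2']].
  assert (HBn1 : ~ inc B n1) by (intro; apply HBO; apply (meet_uniq n1 l); auto).
  assert (Hhh : pa h h').
  { apply (desarg B B1 C1 X P1 Q1 l n1 n2 nB1 k21 g g' h h'); auto.
    all: try (intro; subst; auto; fail).
    all: try (apply par_sym; auto; fail).
    - right; exists O; auto.
    - intro; subst k21. apply HBP. apply (meet_uniq nB1 n1); auto. intro; subst; auto.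
    - intro; subst g'. apply HC1.
      assert (g = n1) by (apply (luniq B1 P1); auto). subst; auto. }
  assert (nB2 = h) by (apply (luniq B C1); auto). subst nB2.
  assert (k22 = h') by (apply (par_uniq Q1 k22 h' h); auto; apply par_sym; auto).
  subst k22.
  apply (meet_uniq h' l); auto. intro; subst; auto.
Qed.

Lemma prod_U A B B1 P1 X nI1 k1 n1 nB1 k21 C1 Q1 Y nI2 k2 n2 nB2 k22 :
  inc A l -> inc B l ->
  PC l O I A B B1 P1 X nI1 k1 n1 nB1 k21 -> PC l O I A B C1 Q1 Y nI2 k2 n2 nB2 k22 -> X = Y.
Proof.
  intros HA' HB S1 S2.
  destruct (classic (A = O)) as [E|HAO].
  { transitivity O. eapply (prod_A0 A B B1 P1 X nI1 k1 n1 nB1 k21); eauto.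
    symmetry; eapply (prod_A0 A B C1 Q1 Y nI2 k2 n2 nB2 k22); eauto. }
  destruct (classic (B = O)) as [E|HBO].
  { transitivity O. eapply (prod_B0 A B B1 P1 X nI1 k1 n1 nB1 k21); eauto.
    symmetry; eapply (prod_B0 A B C1 Q1 Y nI2 k2 n2 nB2 k22); eauto. }
  destruct (classic (A = I)) as [E|HAI].
  { transitivity B. eapply (prod_AI A B B1 P1 X nI1 k1 n1 nB1 k21); eauto.
    symmetry; eapply (prod_AI A B C1 Q1 Y nI2 k2 n2 nB2 k22); eauto. }
  destruct (classic (inc C1 n1)) as [HC|HC];
    [|eapply (prod_gen A B B1 P1 X nI1 k1 n1 nB1 k21 C1 Q1 Y nI2 k2 n2 nB2 k22); eauto].
  destruct (pc_basic _ _ _ _ _ _ _ _ _ _ S1) as (G1 & G2 & G3 & G4 & G5).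
  assert (HB1n : inc B1 n1) by (destruct S1 as (_&_&_&_&_&_&_&?&_); auto).
  assert (HOn : inc O n1) by (destruct S1 as (_&_&_&_&_&_&?&_); auto).
  assert (HB1l : ~ inc B1 l) by (destruct S1 as (?&_); auto).
  assert (HC1l : ~ inc C1 l) by (destruct S2 as (?&_); auto).
  destruct (off_2 l n1 O I B1) as [D [HDl HDn]]; auto.
  { intro; subst; auto. }
  destruct (prod_ex A B D HA' HB HDl) as (R1 & Z & nI3 & k3 & n3 & nB3 & k23 & S3).
  transitivity Z.
  eapply (prod_gen A B B1 P1 X nI1 k1 n1 nB1 k21 D R1 Z nI3 k3 n3 nB3 k23); eauto.
  symmetry.
  eapply (prod_gen A B C1 Q1 Y nI2 k2 n2 nB2 k22 D R1 Z nI3 k3 n3 nB3 k23); eauto.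
  assert (n2 = n1).
  { destruct S2 as (_&_&_&_&_&_&?&?&_). apply (luniq O C1); auto. intro; subst; auto. }
  subst; auto.
Qed.
End Prod.

Lemma sum_cancel l O A Y Y' : inc O l -> inc A l -> inc Y l -> inc Y' l ->
  is_sum inc l O A Y O -> is_sum inc l O A Y' O -> Y = Y'.
Proof.
  intros HO HA' HY HY' H1 H2.
  apply is_sum_SC in H1. apply is_sum_SC in H2.
  destruct H1 as (B1 & P1 & m & n & k & n2 & k2 & S1).
  destruct H2 as (C1 & Q1 & m3 & n3 & k3 & n4 & k4 & S3).
  assert (HB1 : ~ inc B1 l) by (destruct S1 as (?&_); auto).
  destruct (sum_ex l O A Y' B1 HO HA' HY' HB1) as (P1' & X' & m' & n' & k' & n2' & k2' & S2).
  assert (X' = O) by (apply (sum_U l O A Y' B1 P1' X' m' n' k' n2' k2' C1 Q1 O m3 n3 k3 n4 k4); auto).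
  subst X'. clear S3.
  scd S1. destruct S2 as (_ & Hm' & Hml' & HPm' & HOn' & HBn' & HAk' & Hkn' & HPk' & HYn2' & HB1n2' & HPk2' & Hk2' & HOk2' & _).
  assert (m' = m) by (apply (par_uniq B1 m' m l); auto). subst m'.
  assert (HOB1 : O <> B1) by (intro; subst; auto).
  assert (n' = n) by (apply (luniq O B1); auto). subst n'.
  assert (k' = k) by (apply (par_uniq A k' k n); auto). subst k'.
  assert (Hnl : ~ pa n l) by (apply (npar_share n l O); auto; intro; subst; auto).
  assert (Hmk : m <> k).
  { intro; subst k. apply Hnl. eapply par_trans; [apply par_sym; eauto|auto]. }
  assert (P1' = P1) by (apply (meet_uniq m k); auto). subst P1'.
  assert (HP1l : ~ inc P1 l) by (apply (pd1 m l B1 P1); auto).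
  assert (HP1O : P1 <> O) by (intro; subst; auto).
  assert (k2' = k2) by (apply (luniq P1 O); auto). subst k2'.
  assert (n2' = n2).
  { apply (par_uniq B1 n2' n2 k2); auto; apply par_sym; auto. }
  subst n2'.
  apply (meet_uniq n2 l); auto. intro; subst; auto.
Qed.

Lemma prod_cancel l O I A Y Y' : inc O l -> inc I l -> O <> I -> inc A l -> inc Y l -> inc Y' l ->
  is_prod inc l O I A Y I -> is_prod inc l O I A Y' I -> Y = Y'.
Proof.
  intros HO HI HOI HA' HY HY' H1 H2.
  apply is_prod_PC in H1. apply is_prod_PC in H2.
  destruct H1 as (B1 & P1 & nI & k & n & nB & k2 & S1).
  destruct H2 as (C1 & Q1 & nI3 & k3 & n3 & nB3 & k23 & S3).
  assert (HB1 : ~ inc B1 l) by (destruct S1 as (?&_); auto).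
  destruct (prod_ex l O I HO HI HOI A Y' B1 HA' HY' HB1) as (P1' & X' & nI' & k' & n' & nB' & k2' & S2).
  assert (X' = I) by (apply (prod_U l O I HO HI HOI A Y' B1 P1' X' nI' k' n' nB' k2' C1 Q1 I nI3 k3 n3 nB3 k23); auto).
  subst X'. clear S3.
  destruct (pc_basic l O I HO HI HOI _ _ _ _ _ _ _ _ _ _ S1) as (G1 & G2 & G3 & G4 & G5).
  pcd S1. destruct S2 as (_ & HIn' & HBnI' & HAk' & Hkn' & HPk' & HOn' & HBn' & HPn' & HYnB' & HB1nB' & HPk2' & Hk2' & HIk2' & _).
  assert (HOB1 : O <> B1) by (intro; subst; auto).
  assert (HIB1 : I <> B1) by (intro; subst; auto).
  assert (n' = n) by (apply (luniq O B1); auto). subst n'.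
  assert (nI' = nI) by (apply (luniq I B1); auto). subst nI'.
  assert (k' = k) by (apply (par_uniq A k' k nI); auto). subst k'.
  assert (Hkn0 : k <> n) by (intro; subst; auto).
  assert (P1' = P1) by (apply (meet_uniq k n); auto). subst P1'.
  assert (HP1I : P1 <> I) by (intro; subst; apply HOI; apply (meet_uniq n l); auto).
  assert (k2' = k2) by (apply (luniq P1 I); auto). subst k2'.
  assert (nB' = nB).
  { apply (par_uniq B1 nB' nB k2); auto; apply par_sym; auto. }
  subst nB'.
  apply (meet_uniq nB l); auto. intro; subst; auto.
Qed.

Definition PR l l' d P P' := inc P l /\ inc P' l' /\ exists m, inc P m /\ inc P' m /\ pa m d.

Lemma PR_sym l l' d P P' : PR l l' d P P' -> PR l' l d P' P.
Proof. intros (H1 & H2 & m & ? & ? & ?). split; auto. split; auto. exists m; auto. Qed.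

Lemma PR_uniq l l' d P P1 P2 : ~ pa d l' -> PR l l' d P P1 -> PR l l' d P P2 -> P1 = P2.
Proof.
  intros Hd (H1 & H2 & m1 & G1 & G2 & G3) (_ & H3 & m2 & G4 & G5 & G6).
  assert (m1 = m2) by (apply (par_uniq P m1 m2 d); auto). subst m2.
  apply NNPP; intro E. apply Hd. assert (m1 = l') by (apply (luniq P1 P2); auto).
  subst; apply par_sym; auto.
Qed.

Lemma PR_inj l l' d P Q P' : ~ pa d l -> PR l l' d P P' -> PR l l' d Q P' -> P = Q.
Proof. intros Hd H1 H2. apply (PR_uniq l' l d P'); auto; apply PR_sym; auto. Qed.

Lemma PR_ex l l' d P : ~ pa d l' -> inc P l -> exists P', PR l l' d P P'.
Proof.
  intros Hd HP. destruct (ex_par P d) as [m [Hm1 Hm2]].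
  destruct (meet m l') as [P' [H1 H2]].
  { apply (npar_trans d l' m l'); auto. apply par_refl. }
  exists P'; split; auto; split; auto; exists m; auto.
Qed.

Lemma PR_refl l d P : inc P l -> PR l l d P P.
Proof. intros HP. destruct (ex_par P d) as [m [Hm1 Hm2]]. split; auto; split; auto; exists m; auto. Qed.

Lemma PR_both l l' d P : inc P l -> inc P l' -> PR l l' d P P.
Proof. intros H1 H2. destruct (ex_par P d) as [m [? ?]]. split; auto; split; auto; exists m; auto. Qed.

Lemma PR_fix l l' d P P' : ~ pa d l' -> inc P l' -> PR l l' d P P' -> P' = P.
Proof.
  intros Hd HP H. apply (PR_uniq l l' d P); auto.
  destruct H as (H1 & _). destruct (ex_par P d) as [m [Hm1 Hm2]].
  split; auto; split; auto; exists m; auto.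
Qed.

Lemma PR_same l d P P' : ~ pa d l -> PR l l d P P' -> P = P'.
Proof. intros Hd H. symmetry. apply (PR_fix l l d P P'); auto. destruct H; auto. Qed.

Lemma PR_trans l k l' d P Q R : PR l k d P Q -> PR l l' d P R -> PR k l' d Q R.
Proof.
  intros (H1 & H2 & m1 & G1 & G2 & G3) (_ & H3 & m2 & G4 & G5 & G6).
  assert (m1 = m2) by (apply (par_uniq P m1 m2 d); auto). subst m2.
  split; auto; split; auto; exists m1; auto.
Qed.

Lemma PR_dline l l' d P P' m : PR l l' d P P' -> inc P m -> pa m d -> inc P' m.
Proof.
  intros (H1 & H2 & m1 & G1 & G2 & G3) Hm Hmd.
  assert (m1 = m) by (apply (par_uniq P m1 m d); auto). subst; auto.
Qed.

Lemma TR O O' dO d Y Y' dY Z Z' dZ p p' q q' :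
 inc O dO -> inc O' dO -> pa dO d -> O <> O' ->
 inc Y dY -> inc Y' dY -> pa dY d -> inc Z dZ -> inc Z' dZ -> pa dZ d ->
 ~ inc Y dO -> ~ inc Z dO -> Y <> Z ->
 inc O p -> inc Y p -> inc O' p' -> inc Y' p' -> pa p p' ->
 inc O q -> inc Z q -> inc O' q' -> inc Z' q' -> pa q q' ->
 Y' <> Z' /\ (forall r r', inc Y r -> inc Z r -> inc Y' r' -> inc Z' r' -> pa r r').
Proof.
  intros HOd HO'd HdOd HOO' HYd HY'd HdYd HZd HZ'd HdZd HYO HZO HYZ Hp1 Hp2 Hp3 Hp4 Hpp
    Hq1 Hq2 Hq3 Hq4 Hqq.
  assert (HpdO : p <> dO) by (intro; subst; auto).
  assert (HqdO : q <> dO) by (intro; subst; auto).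
  assert (Hpp' : p <> p').
  { intro; subst p'. apply HpdO. apply (luniq O O'); auto. }
  assert (Hqq' : q <> q').
  { intro; subst q'. apply HqdO. apply (luniq O O'); auto. }
  assert (HYY' : Y <> Y').
  { intro; subst Y'. apply Hpp'. apply (par_inc_eq p p' Y); auto. }
  assert (HZZ' : Z <> Z').
  { intro; subst Z'. apply Hqq'. apply (par_inc_eq q q' Z); auto. }
  assert (HY'O' : Y' <> O').
  { intro; subst Y'. apply HYO. assert (dY = dO) by (apply (par_uniq O' dY dO d); auto).
    subst; auto. }
  assert (HZ'O' : Z' <> O').
  { intro; subst Z'. apply HZO. assert (dZ = dO) by (apply (par_uniq O' dZ dO d); auto).
    subst; auto. }
  assert (HYdO : dY <> dO) by (intro; subst; auto).
  assert (HZdO : dZ <> dO) by (intro; subst; auto).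
  destruct (classic (dY = dZ)) as [E|E].
  - subst dZ.
    assert (HY'Z' : Y' <> Z').
    { intro; subst Z'.
      assert (p' = q') by (apply (luniq O' Y'); auto). subst q'.
      assert (p = q).
      { apply (par_inc_eq p q O); auto. apply (par_trans p p' q); auto. apply par_sym; auto. }
      subst q. assert (p = dY) by (apply (luniq Y Z); auto). subst p.
      apply HYdO. apply (par_uniq O dY dO d); auto. }
    split; auto. intros r r' Hr1 Hr2 Hr3 Hr4.
    assert (r = dY) by (apply (luniq Y Z); auto).
    assert (r' = dY) by (apply (luniq Y' Z'); auto). subst; apply par_refl.
  - assert (HY'Z' : Y' <> Z').
    { intro; subst Z'. apply E. apply (par_uniq Y' dY dZ d); auto. }
    split; auto. intros r r' Hr1 Hr2 Hr3 Hr4.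
    apply (desarg Y O Z Y' O' Z' dY dO dZ p p' q q' r r'); auto.
    + left; split; [|split]; eapply par_trans; eauto; apply par_sym; auto.
    + intro; subst; auto.
    + intro; subst; auto.
Qed.

Lemma TS_par l l' d O A B X O' A' B' X' :
  pa l l' -> l <> l' -> ~ pa d l -> ~ pa d l' ->
  PR l l' d O O' -> PR l l' d A A' -> PR l l' d B B' -> PR l l' d X X' ->
  is_sum inc l O A B X -> is_sum inc l' O' A' B' X'.
Proof.
  intros Hp Hne Hdl Hdl' PO PA PB PX HS.
  destruct PO as (HO & HO' & mO & HOm & HO'm & HmOd).
  destruct PA as (HA' & HA'' & mA & HAm & HA'm & HmAd).
  destruct PB as (HB & HB' & mB & HBm & HB'm & HmBd).
  destruct PX as (HX & HX' & mX & HXm & HX'm & HmXd).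
  assert (HO'l : ~ inc O' l) by (apply (par_disj l' l O'); auto; apply par_sym; auto).
  apply is_sum_SC in HS. destruct HS as (C1 & Q1 & m3 & n3 & k3 & n4 & k4 & S0).
  destruct (sum_ex l O A B O' HO HA' HB HO'l) as (P1 & X0 & m & n & k & n2 & k2 & S).
  assert (X0 = X) by (apply (sum_U l O A B O' P1 X0 m n k n2 k2 C1 Q1 X m3 n3 k3 n4 k4); auto).
  subst X0. clear S0. scd S.
  assert (m = l') by (apply (par_uniq O' m l' l); auto; apply par_sym; auto). subst m.
  assert (HOO' : O <> O') by (intro; subst; auto).
  assert (n = mO) by (apply (luniq O O'); auto). subst n.
  assert (k = mA) by (apply (par_uniq A k mA d); auto; eapply par_trans; eauto). subst k.
  assert (P1 = A').
  { apply (meet_uniq l' mA); auto. intro; subst; apply Hdl'; apply par_sym; auto. }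
  subst P1.
  exists B, X. split; [apply (par_disj l l' B); auto|].
  split; [exists l; split; auto|].
  split; [exists n2, k2; auto|].
  split; [|auto].
  exists mB, mX. repeat split; auto. eapply par_trans; eauto. apply par_sym; auto.
Qed.

Lemma TS_cen_gen l l' d O A B X A' B' X' :
  l <> l' -> inc O l -> inc O l' -> ~ pa d l -> ~ pa d l' ->
  A <> O -> B <> O -> X <> O ->
  PR l l' d A A' -> PR l l' d B B' -> PR l l' d X X' ->
  is_sum inc l O A B X -> is_sum inc l' O A' B' X'.
Proof.
  intros Hne HO HO' Hdl Hdl' HAO HBO HXO PA PB PX HS.
  assert (POO : PR l l' d O O).
  { destruct (ex_par O d) as [m [? ?]]. split; auto; split; auto; exists m; auto. }
  assert (HA'O : A' <> O) by (intro; subst; apply HAO; apply (PR_inj l l' d A O O); auto).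
  assert (HB'O : B' <> O) by (intro; subst; apply HBO; apply (PR_inj l l' d B O O); auto).
  assert (HX'O : X' <> O) by (intro; subst; apply HXO; apply (PR_inj l l' d X O O); auto).
  assert (PA0 := PA). assert (PB0 := PB). assert (PX0 := PX).
  destruct PA as (HAl & HA'' & mA & HAm & HA'm & HmAd).
  destruct PB as (HB & HB'' & mB & HBm & HB'm & HmBd).
  destruct PX as (HX & HX'' & mX & HXm & HX'm & HmXd).
  assert (Hll' : forall P, inc P l -> inc P l' -> P = O).
  { intros P H1 H2. apply (meet_uniq l l'); auto. }
  assert (HA'l : ~ inc A' l) by (intro; apply HA'O; auto).
  destruct (ex_par O d) as [dO [HOd HdOd]].
  assert (HdOl : dO <> l) by (intro; subst; apply Hdl; apply par_sym; auto).
  assert (HdOl' : dO <> l') by (intro; subst; apply Hdl'; apply par_sym; auto).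
  assert (HdO : forall P, inc P dO -> inc P l -> P = O).
  { intros P H1 H2. apply (meet_uniq dO l); auto. }
  assert (HdO' : forall P, inc P dO -> inc P l' -> P = O).
  { intros P H1 H2. apply (meet_uniq dO l'); auto. }
  destruct (ex_par A' l) as [L [HA'L HLl]].
  destruct (meet dO L) as [B1 [HB1d HB1L]].
  { apply (npar_trans d l dO L); auto. }
  assert (HB1l : ~ inc B1 l) by (apply (pd1 L l A' B1); auto).
  assert (HB1O : B1 <> O) by (intro; subst; auto).
  assert (HB1l' : ~ inc B1 l') by (intro; apply HB1O; auto).
  apply is_sum_SC in HS. destruct HS as (C1 & Q1 & m3 & n3 & k3 & n4 & k4 & S0).
  destruct (sum_ex l O A B B1 HO HAl HB HB1l) as (P1 & X0 & m & n & k & n2 & k2 & S).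
  assert (X0 = X) by (apply (sum_U l O A B B1 P1 X0 m n k n2 k2 C1 Q1 X m3 n3 k3 n4 k4); auto).
  subst X0. clear S0.
  assert (HP1B1 : P1 <> B1) by (intro; apply HAO; apply (sum_P1B1 l O A B B1 P1 X m n k n2 k2); auto).
  assert (HXB : X <> B) by (intro; apply HAO; apply (sum_XB l O A B B1 P1 X m n k n2 k2); auto).
  scd S.
  assert (n = dO) by (apply (luniq O B1); auto). subst n.
  assert (k = mA) by (apply (par_uniq A k mA d); auto; eapply par_trans; eauto). subst k.
  assert (HP1l : ~ inc P1 l) by (apply (pd1 m l B1 P1); auto).
  assert (HBdO : ~ inc B dO) by (intro; apply HBO; auto).
  assert (Hn2dO : n2 <> dO) by (intro; subst; auto).
  destruct (meet dO k2) as [Z [HZd HZk2]].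
  { intro H. apply (npar_share n2 dO B1); auto. eapply par_trans; [|apply par_sym; eauto].
    apply par_sym; auto. }
  assert (HB1k2 : ~ inc B1 k2).
  { intro. assert (k2 = n2) by (apply (par_inc_eq k2 n2 B1); auto). subst k2.
    apply HP1B1. apply (meet_uniq n2 m); auto. intro; subst; auto.
    apply (par_disj l m B); auto. apply par_sym; auto. intro; subst; auto. }
  assert (HZB1 : Z <> B1) by (intro; subst; auto).
  assert (HB'X' : B' <> X') by (intro; subst; apply HXB; symmetry; apply (PR_inj l l' d B X X'); auto).
  assert (HZX : Z <> X) by (intro; subst; apply HXO; auto).
  assert (HBB' : B <> B') by (intro; subst; apply HBO; auto).
  assert (HXX' : X <> X') by (intro; subst; apply HXO; auto).
  assert (HB1B' : B1 <> B') by (intro; subst; auto).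
  assert (HZX' : Z <> X') by (intro; subst; apply HX'O; auto).
  assert (HmBl : mB <> l) by (intro; subst; apply Hdl; apply par_sym; auto).
  assert (HmBX : mB <> mX).
  { intro; subst mX. apply HXB. apply (meet_uniq mB l); auto. }
  assert (HB1B : B1 <> B) by (intro; subst; auto).
  destruct (ex_line B1 B' HB1B') as [e1 [He11 He12]].
  destruct (ex_line Z X' HZX') as [e2 [He21 He22]].
  assert (He : pa e1 e2).
  { apply (desarg B1 B B' Z X X' dO l l' n2 k2 mB mX e1 e2); auto.
    - right; exists O; auto.
    - apply par_sym; auto.
    - intro; subst; auto.
    - eapply par_trans; eauto; apply par_sym; auto. }
  destruct (ex_par B1 l') as [m' [HB1m' Hm'l']].
  assert (HB'm' : ~ inc B' m') by (apply (pd2 m' l' B1 B'); auto).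
  assert (Hme : ~ pa e2 m').
  { intro H. apply (npar_share e1 m' B1); auto. intro; subst; auto.
    eapply par_trans; eauto. }
  destruct (meet e2 m' Hme) as [Q [HQe2 HQm']].
  assert (HX'dO : ~ inc X' dO) by (intro; apply HX'O; auto).
  assert (HB'dO : ~ inc B' dO) by (intro; apply HB'O; auto).
  assert (Hk2e2 : k2 <> e2).
  { intro; subst e2.
    assert (e1 = n2).
    { apply (par_inc_eq e1 n2 B1); auto. eapply par_trans; eauto. }
    subst e1. assert (n2 = mB) by (apply (luniq B B'); auto). subst n2.
    apply HBdO. assert (mB = dO) by (apply (par_uniq B1 mB dO d); auto). subst; auto. }
  assert (HB1Q : B1 <> Q).
  { intro; subst Q. assert (e2 = e1) by (apply (par_inc_eq e2 e1 B1); auto; apply par_sym; auto).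
    subst e2. apply HZB1. apply (meet_uniq e1 dO); auto. intro; subst; auto. }
  assert (Hmm' : m <> m').
  { intro; subst m'. apply (npar_share l l' O); auto.
    eapply par_trans; [apply par_sym; eauto|auto]. }
  assert (HP1Q : P1 <> Q).
  { intro; subst Q. apply HP1B1. apply (meet_uniq m m'); auto. }
  assert (HQX' : Q <> X').
  { intro; subst. apply (pd2 m' l' B1 X'); auto. }
  assert (HXP1 : X <> P1) by (intro; subst; auto).
  destruct (ex_line P1 Q HP1Q) as [g [Hg1 Hg2]].
  assert (Hg : pa mX g).
  { apply (desarg X O X' P1 B1 Q k2 dO e2 l m l' m' mX g); auto.
    - intro; subst; auto.
    - intro; subst; auto.
    - right; exists Z; auto.
    - apply par_sym; auto.
    - intro; subst; auto.
    - apply par_sym; auto.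
    - intro; subst; auto. }
  assert (g = mA).
  { apply (par_uniq P1 g mA d); auto. eapply par_trans; [apply par_sym; eauto|auto]. }
  subst g.
  exists B1, Q. split; auto.
  split; [exists m'; auto|].
  split; [exists dO, mA; repeat split; auto; eapply par_trans; eauto; apply par_sym; auto|].
  split; [exists e1, e2; repeat split; auto; apply par_sym; auto|auto].
Qed.

Lemma sum_exists l O A B : inc O l -> inc A l -> inc B l ->
  exists Y B1 P1 m n k n2 k2, SC l O A B B1 P1 Y m n k n2 k2.
Proof.
  intros HO HA' HB. destruct (ex_off l) as [B1 HB1].
  destruct (sum_ex l O A B B1 HO HA' HB HB1) as (P1 & Y & m & n & k & n2 & k2 & S).
  exists Y, B1, P1, m, n, k, n2, k2; auto.
Qed.

Lemma SC_is_sum l O A B B1 P1 Y m n k n2 k2 : SC l O A B B1 P1 Y m n k n2 k2 -> is_sum inc l O A B Y.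
Proof. intros S. apply is_sum_SC. exists B1, P1, m, n, k, n2, k2; auto. Qed.

Lemma SC_Yl l O A B B1 P1 Y m n k n2 k2 : SC l O A B B1 P1 Y m n k n2 k2 -> inc Y l.
Proof. intros S; destruct S as (_&_&_&_&_&_&_&_&_&_&_&_&_&_&?); auto. Qed.

Lemma is_sum_l l O A B X : is_sum inc l O A B X -> inc X l.
Proof. intros H; apply is_sum_SC in H; destruct H as (?&?&?&?&?&?&?&S); eapply SC_Yl; eauto. Qed.

Lemma is_sum_uniq l O A B X Y : inc O l -> inc A l -> inc B l ->
  is_sum inc l O A B X -> is_sum inc l O A B Y -> X = Y.
Proof.
  intros HO HA' HB H1 H2. apply is_sum_SC in H1; apply is_sum_SC in H2.
  destruct H1 as (B1 & P1 & m & n & k & n2 & k2 & S1).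
  destruct H2 as (C1 & Q1 & m' & n' & k' & n2' & k2' & S2).
  apply (sum_U l O A B B1 P1 X m n k n2 k2 C1 Q1 Y m' n' k' n2' k2'); auto.
Qed.

Lemma is_sum_A0 l O B X : inc O l -> inc B l -> is_sum inc l O O B X -> X = B.
Proof.
  intros HO HB H. apply is_sum_SC in H. destruct H as (B1 & P1 & m & n & k & n2 & k2 & S1).
  apply (sum_A0 l O O B B1 P1 X m n k n2 k2); auto.
Qed.

Lemma is_sum_B0 l O A X : inc O l -> inc A l -> is_sum inc l O A O X -> X = A.
Proof.
  intros HO HA' H. apply is_sum_SC in H. destruct H as (B1 & P1 & m & n & k & n2 & k2 & S1).
  apply (sum_B0 l O A O B1 P1 X m n k n2 k2); auto.
Qed.

Lemma is_sum_ex l O A B : inc O l -> inc A l -> inc B l -> exists Y, is_sum inc l O A B Y.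
Proof.
  intros HO HA' HB. destruct (sum_exists l O A B HO HA' HB) as (Y & B1 & P1 & m & n & k & n2 & k2 & S).
  exists Y; eapply SC_is_sum; eauto.
Qed.

Lemma TS_cen l l' d O A B X A' B' X' :
  l <> l' -> inc O l -> inc O l' -> ~ pa d l -> ~ pa d l' ->
  PR l l' d A A' -> PR l l' d B B' -> PR l l' d X X' ->
  is_sum inc l O A B X -> is_sum inc l' O A' B' X'.
Proof.
  intros Hne HO HO' Hdl Hdl' PA PB PX HS.
  assert (POO : PR l l' d O O).
  { destruct (ex_par O d) as [m [? ?]]. split; auto; split; auto; exists m; auto. }
  assert (HAl : inc A l) by (destruct PA; auto).
  assert (HB : inc B l) by (destruct PB; auto).
  assert (HA' : inc A' l') by (destruct PA as (_&?&_); auto).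
  assert (HB' : inc B' l') by (destruct PB as (_&?&_); auto).
  destruct (classic (A = O)) as [E|HAO].
  { subst A. assert (X = B) by (apply (is_sum_A0 l O B X); auto). subst X.
    assert (A' = O) by (apply (PR_uniq l l' d O); auto). subst A'.
    assert (X' = B') by (apply (PR_uniq l l' d B); auto). subst X'.
    destruct (is_sum_ex l' O O B') as [Y HY]; auto.
    assert (Y = B') by (apply (is_sum_A0 l' O B' Y); auto). subst; auto. }
  destruct (classic (B = O)) as [E|HBO].
  { subst B. assert (X = A) by (apply (is_sum_B0 l O A X); auto). subst X.
    assert (B' = O) by (apply (PR_uniq l l' d O); auto). subst B'.
    assert (X' = A') by (apply (PR_uniq l l' d A); auto). subst X'.
    destruct (is_sum_ex l' O A' O) as [Y HY]; auto.
    assert (Y = A') by (apply (is_sum_B0 l' O A' Y); auto). subst; auto. }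
  destruct (classic (X = O)) as [E|HXO]; [|apply (TS_cen_gen l l' d O A B X); auto].
  subst X. assert (X' = O) by (apply (PR_uniq l l' d O); auto). subst X'.
  destruct (is_sum_ex l' O A' B') as [Y HY]; auto.
  assert (HYl : inc Y l') by (eapply is_sum_l; eauto).
  destruct (classic (Y = O)) as [E|HYO]; [subst; auto|exfalso].
  destruct (PR_ex l' l d Y Hdl HYl) as [Y' PY].
  assert (HA'O : A' <> O) by (intro; subst; apply HAO; apply (PR_inj l l' d A O O); auto).
  assert (HB'O : B' <> O) by (intro; subst; apply HBO; apply (PR_inj l l' d B O O); auto).
  assert (H := TS_cen_gen l' l d O A' B' Y A B Y' (not_eq_sym Hne) HO' HO Hdl' Hdl HA'O HB'O HYO
             (PR_sym _ _ _ _ _ PA) (PR_sym _ _ _ _ _ PB) PY HY).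
  assert (Y' = O) by (apply (is_sum_uniq l O A B); auto).
  subst Y'. apply HYO. apply (PR_inj l' l d Y O O); auto. apply PR_sym; auto.
Qed.

Lemma PC_is_prod l O I A B B1 P1 X nI k n nB k2 : PC l O I A B B1 P1 X nI k n nB k2 -> is_prod inc l O I A B X.
Proof. intros S. apply is_prod_PC. exists B1, P1, nI, k, n, nB, k2; auto. Qed.

Lemma is_prod_l l O I A B X : is_prod inc l O I A B X -> inc X l.
Proof. intros H; apply is_prod_PC in H; destruct H as (?&?&?&?&?&?&?&S).
  destruct S as (_&_&_&_&_&_&_&_&_&_&_&_&_&_&?); auto. Qed.

Lemma is_prod_uniq l O I A B X Y : inc O l -> inc I l -> O <> I -> inc A l -> inc B l ->
  is_prod inc l O I A B X -> is_prod inc l O I A B Y -> X = Y.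
Proof.
  intros HO HI HOI HA' HB H1 H2. apply is_prod_PC in H1; apply is_prod_PC in H2.
  destruct H1 as (B1 & P1 & nI & k & n & nB & k2 & S1).
  destruct H2 as (C1 & Q1 & nI' & k' & n' & nB' & k2' & S2).
  apply (prod_U l O I HO HI HOI A B B1 P1 X nI k n nB k2 C1 Q1 Y nI' k' n' nB' k2'); auto.
Qed.

Lemma is_prod_ex l O I A B : inc O l -> inc I l -> O <> I -> inc A l -> inc B l ->
  exists Y, is_prod inc l O I A B Y.
Proof.
  intros HO HI HOI HA' HB. destruct (ex_off l) as [B1 HB1].
  destruct (prod_ex l O I HO HI HOI A B B1 HA' HB HB1) as (P1 & Y & nI & k & n & nB & k2 & S).
  exists Y; eapply PC_is_prod; eauto.
Qed.

Lemma is_prod_A0 l O I B X : inc O l -> inc I l -> O <> I -> inc B l ->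
  is_prod inc l O I O B X -> X = O.
Proof.
  intros HO HI HOI HB H. apply is_prod_PC in H. destruct H as (B1 & P1 & nI & k & n & nB & k2 & S1).
  apply (prod_A0 l O I HO HI HOI O B B1 P1 X nI k n nB k2); auto.
Qed.

Lemma is_prod_B0 l O I A X : inc O l -> inc I l -> O <> I ->
  is_prod inc l O I A O X -> X = O.
Proof.
  intros HO HI HOI H. apply is_prod_PC in H. destruct H as (B1 & P1 & nI & k & n & nB & k2 & S1).
  apply (prod_B0 l O I HO HI HOI A O B1 P1 X nI k n nB k2); auto.
Qed.

Lemma TP_cen l l' d O I A B X I' A' B' X' :
  l <> l' -> inc O l -> inc O l' -> ~ pa d l -> ~ pa d l' -> inc I l -> O <> I ->
  PR l l' d I I' -> PR l l' d A A' -> PR l l' d B B' -> PR l l' d X X' ->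
  is_prod inc l O I A B X -> is_prod inc l' O I' A' B' X'.
Proof.
  intros Hne HO HO' Hdl Hdl' HI HOI PI PA PB PX HS.
  assert (POO : PR l l' d O O).
  { destruct (ex_par O d) as [m [? ?]]. split; auto; split; auto; exists m; auto. }
  assert (HI'O : I' <> O) by (intro; subst; apply HOI; symmetry; apply (PR_inj l l' d I O O); auto).
  assert (HI' : inc I' l') by (destruct PI as (_&?&_); auto).
  assert (HI'l : ~ inc I' l) by (intro; apply HI'O; apply (meet_uniq l l'); auto).
  assert (HAl : inc A l) by (destruct PA; auto).
  assert (HBl : inc B l) by (destruct PB; auto).
  assert (HA' : inc A' l') by (destruct PA as (_&?&_); auto).
  assert (HB' : inc B' l') by (destruct PB as (_&?&_); auto).
  destruct (classic (B = O)) as [E|HBO].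
  { subst B. assert (X = O) by (apply (is_prod_B0 l O I A X); auto). subst X.
    assert (B' = O) by (apply (PR_uniq l l' d O); auto). subst B'.
    assert (X' = O) by (apply (PR_uniq l l' d O); auto). subst X'.
    destruct (is_prod_ex l' O I' A' O) as [Y HY]; auto.
    assert (Y = O) by (apply (is_prod_B0 l' O I' A' Y); auto). subst; auto. }
  apply is_prod_PC in HS. destruct HS as (C1 & Q1 & nI3 & k3 & n3 & nB3 & k23 & S0).
  destruct (prod_ex l O I HO HI HOI A B I' HAl HBl HI'l) as (P1 & X0 & nI & k & n & nB & k2 & S).
  assert (X0 = X) by (apply (prod_U l O I HO HI HOI A B I' P1 X0 nI k n nB k2 C1 Q1 X nI3 k3 n3 nB3 k23); auto).
  subst X0. clear S0. pcd S.
  destruct PI as (_ & _ & mI & HIm & HI'm & HmId).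
  destruct PA as (_ & _ & mA & HAm & HA'm & HmAd).
  destruct PB as (_ & _ & mB & HBm & HB'm & HmBd).
  destruct PX as (_ & HX' & mX & HXm & HX'm & HmXd).
  assert (nI = mI) by (apply (luniq I I'); auto; intro; subst; auto). subst nI.
  assert (k = mA) by (apply (par_uniq A k mA d); auto; eapply par_trans; eauto). subst k.
  assert (n = l') by (apply (luniq O I'); auto). subst n.
  assert (P1 = A').
  { apply (meet_uniq mA l'); auto. intro; subst; apply Hdl'; apply par_sym; auto. }
  subst P1.
  exists B, X. split; [intro; apply HBO; apply (meet_uniq l l'); auto|].
  split; [exists nB, k2; auto|].
  split; [exists l; auto|].
  split; [|auto].
  exists mB, mX. repeat split; auto. eapply par_trans; eauto. apply par_sym; auto.
Qed.

Lemma TP_par l l' d O I A B X O' I' A' B' X' :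
  pa l l' -> l <> l' -> ~ pa d l -> ~ pa d l' -> O <> I ->
  PR l l' d O O' -> PR l l' d I I' -> PR l l' d A A' -> PR l l' d B B' -> PR l l' d X X' ->
  is_prod inc l O I A B X -> is_prod inc l' O' I' A' B' X'.
Proof.
  intros Hp Hne Hdl Hdl' HOI PO PI PA PB PX HS.
  assert (HO'I' : O' <> I') by (intro; subst; apply HOI; apply (PR_inj l l' d O I I'); auto).
  assert (PO0 := PO). assert (PI0 := PI). assert (PA0 := PA). assert (PB0 := PB). assert (PX0 := PX).
  destruct PO as (HO & HO' & dO & HOd & HO'd & HdOd).
  destruct PI as (HI & HI' & mI & HIm & HI'm & HmId).
  destruct PA as (HAl & HA' & mA & HAm & HA'm & HmAd).
  destruct PB as (HBl & HB' & mB & HBm & HB'm & HmBd).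
  destruct PX as (HXl & HX' & mX & HXm & HX'm & HmXd).
  destruct (classic (A = O)) as [E|HAO].
  { subst A. assert (X = O) by (apply (is_prod_A0 l O I B X); auto). subst X.
    assert (A' = O') by (apply (PR_uniq l l' d O); auto). subst A'.
    assert (X' = O') by (apply (PR_uniq l l' d O); auto). subst X'.
    destruct (is_prod_ex l' O' I' O' B') as [Y HY]; auto.
    assert (Y = O') by (apply (is_prod_A0 l' O' I' B' Y); auto). subst; auto. }
  destruct (classic (B = O)) as [E|HBO].
  { subst B. assert (X = O) by (apply (is_prod_B0 l O I A X); auto). subst X.
    assert (B' = O') by (apply (PR_uniq l l' d O); auto). subst B'.
    assert (X' = O') by (apply (PR_uniq l l' d O); auto). subst X'.
    destruct (is_prod_ex l' O' I' A' O') as [Y HY]; auto.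
    assert (Y = O') by (apply (is_prod_B0 l' O' I' A' Y); auto). subst; auto. }
  assert (HOO' : O <> O') by (intro; subst; apply (par_disj l l' O'); auto).
  assert (HdOl : dO <> l) by (intro; subst; apply Hdl; apply par_sym; auto).
  assert (HdO : forall P, inc P dO -> inc P l -> P = O).
  { intros P H1 H2. apply (meet_uniq dO l); auto. }
  destruct (off_2 dO l O O' I) as [B1 [HB1d HB1l]]; auto.
  apply is_prod_PC in HS. destruct HS as (C1 & Q1 & nI3 & k3 & n3 & nB3 & k23 & S0).
  destruct (prod_ex l O I HO HI HOI A B B1 HAl HBl HB1l) as (P1 & X0 & nI & k & n & nB & k2 & S).
  assert (X0 = X) by (apply (prod_U l O I HO HI HOI A B B1 P1 X0 nI k n nB k2 C1 Q1 X nI3 k3 n3 nB3 k23); auto).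
  subst X0. clear S0.
  assert (HP1O : P1 <> O) by (intro; apply HAO; apply (prod_P1O l O I HO HI HOI A B B1 P1 X nI k n nB k2); auto).
  assert (HXO : X <> O).
  { intro E. destruct (prod_X0 l O I HO HI HOI A B B1 P1 X nI k n nB k2) as [?|?]; auto. }
  destruct (pc_basic l O I HO HI HOI _ _ _ _ _ _ _ _ _ _ S) as (G1 & G2 & G3 & G4 & G5).
  pcd S.
  assert (HndO : n <> dO) by (intro; subst; auto).
  assert (Hnd : ~ pa n d).
  { intro H. apply HndO. apply (par_uniq O n dO d); auto. }
  destruct (ex_par O' n) as [n' [HO'n' Hn'n]].
  destruct (ex_par B1 d) as [dB1 [HB1dB1 HdB1d]].
  destruct (ex_par P1 d) as [dP1 [HP1dP1 HdP1d]].
  destruct (meet dB1 n') as [B1' [HB1'1 HB1'2]].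
  { intro H. apply Hnd. eapply par_trans; [apply par_sym; eauto|].
    eapply par_trans; [apply par_sym; eauto| auto]. }
  destruct (meet dP1 n') as [P1' [HP1'1 HP1'2]].
  { intro H. apply Hnd. eapply par_trans; [apply par_sym; eauto|].
    eapply par_trans; [apply par_sym; eauto| auto]. }
  assert (HP1l : ~ inc P1 l) by (intro; apply HP1O; apply (meet_uniq n l); auto).
  assert (HP1dO : ~ inc P1 dO) by (intro; apply HP1O; apply (meet_uniq n dO); auto).
  assert (HIdO : ~ inc I dO) by (intro; apply HOI; symmetry; auto).
  assert (HAdO : ~ inc A dO) by (intro; apply HAO; auto).
  assert (HBdO : ~ inc B dO) by (intro; apply HBO; auto).
  assert (HXdO : ~ inc X dO) by (intro; apply HXO; auto).
  assert (Hll' : pa l l') by auto.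
  assert (Hnn' : pa n n') by (apply par_sym; auto).
  destruct (TR O O' dO d B1 B1' dB1 I I' mI n n' l l') as [T1a T1b]; auto.
  { intro; subst; auto. }
  destruct (TR O O' dO d P1 P1' dP1 A A' mA n n' l l') as [T2a T2b]; auto.
  { intro; subst; auto. }
  destruct (TR O O' dO d B1 B1' dB1 B B' mB n n' l l') as [T3a T3b]; auto.
  { intro; subst; auto. }
  destruct (TR O O' dO d P1 P1' dP1 X X' mX n n' l l') as [T4a T4b]; auto.
  { intro; subst; auto. }
  destruct (ex_line B1' I' T1a) as [nI' [H1 H2]].
  destruct (ex_line P1' A' T2a) as [k' [H3 H4]].
  destruct (ex_line B1' B' T3a) as [nB' [H5 H6]].
  destruct (ex_line P1' X' T4a) as [k2' [H7 H8]].
  assert (E1 := T1b nI nI' HBnI HIn H1 H2).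
  assert (E2 := T2b k k' HPk HAk H3 H4).
  assert (E3 := T3b nB nB' HB1nB HBnB H5 H6).
  assert (E4 := T4b k2 k2' HPk2 HXk2 H7 H8).
  assert (Hn'l' : n' <> l').
  { intro; subst n'. apply G1. apply (par_inc_eq n l O); auto.
    eapply par_trans; [apply par_sym; eauto|]. apply par_sym; auto. }
  exists B1', P1'. split.
  { intro HB1'l'. assert (B1' = O') by (apply (meet_uniq n' l'); auto). subst B1'.
    apply HB1d. assert (dB1 = dO) by (apply (par_uniq O' dB1 dO d); auto). subst; auto. }
  split.
  { exists nI', k'. repeat split; auto.
    apply (par_trans k' k nI'); [apply par_sym; auto|].
    apply (par_trans k nI nI'); auto. }
  split; [exists n'; auto|].
  split; [|auto].
  exists nB', k2'. repeat split; auto.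
  apply (par_trans k2' k2 nB'); [apply par_sym; auto|].
  apply (par_trans k2 nB nB'); auto.
Qed.

Lemma TS l l' d O A B X O' A' B' X' : ~ pa d l -> ~ pa d l' ->
  PR l l' d O O' -> PR l l' d A A' -> PR l l' d B B' -> PR l l' d X X' ->
  is_sum inc l O A B X -> is_sum inc l' O' A' B' X'.
Proof.
  intros Hdl Hdl' PO PA PB PX HS.
  assert (Hpar : forall k O1 A1 B1 X1, pa k l' -> ~ pa d k -> PR k l' d O1 O' -> PR k l' d A1 A' ->
     PR k l' d B1 B' -> PR k l' d X1 X' -> is_sum inc k O1 A1 B1 X1 -> is_sum inc l' O' A' B' X').
  { intros k O1 A1 B1 X1 Hk Hdk P1 P2 P3 P4 H.
    destruct (classic (k = l')) as [E|E].
    - subst k. rewrite <- (PR_same l' d O1 O'), <- (PR_same l' d A1 A'),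
        <- (PR_same l' d B1 B'), <- (PR_same l' d X1 X'); auto.
    - apply (TS_par k l' d O1 A1 B1 X1); auto. }
  destruct (classic (pa l l')) as [Hp|Hp]; [apply (Hpar l O A B X); auto|].
  assert (HO : inc O l) by (destruct PO; auto).
  destruct (ex_par O l') as [k [HOk Hkl']].
  assert (Hkl : k <> l) by (intro; subst; auto).
  assert (Hdk : ~ pa d k) by (intro; apply Hdl'; eapply par_trans; eauto).
  destruct (PR_ex l k d A Hdk) as [A1 PA1]. destruct PA; auto.
  destruct (PR_ex l k d B Hdk) as [B1 PB1]. destruct PB; auto.
  destruct (PR_ex l k d X Hdk) as [X1 PX1]. destruct PX; auto.
  assert (HS1 := TS_cen l k d O A B X A1 B1 X1 (not_eq_sym Hkl) HO HOk Hdl Hdk PA1 PB1 PX1 HS).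
  apply (Hpar k O A1 B1 X1); auto.
  - apply (PR_trans l k l' d O O O'); auto. apply PR_both; auto.
  - apply (PR_trans l k l' d A A1 A'); auto.
  - apply (PR_trans l k l' d B B1 B'); auto.
  - apply (PR_trans l k l' d X X1 X'); auto.
Qed.

Lemma TP l l' d O I A B X O' I' A' B' X' : ~ pa d l -> ~ pa d l' -> O <> I ->
  PR l l' d O O' -> PR l l' d I I' -> PR l l' d A A' -> PR l l' d B B' -> PR l l' d X X' ->
  is_prod inc l O I A B X -> is_prod inc l' O' I' A' B' X'.
Proof.
  intros Hdl Hdl' HOI PO PI PA PB PX HS.
  assert (Hpar : forall k O1 I1 A1 B1 X1, pa k l' -> ~ pa d k -> O1 <> I1 -> PR k l' d O1 O' ->
     PR k l' d I1 I' -> PR k l' d A1 A' ->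
     PR k l' d B1 B' -> PR k l' d X1 X' -> is_prod inc k O1 I1 A1 B1 X1 -> is_prod inc l' O' I' A' B' X').
  { intros k O1 I1 A1 B1 X1 Hk Hdk HOI1 P0 P1 P2 P3 P4 H.
    destruct (classic (k = l')) as [E|E].
    - subst k. rewrite <- (PR_same l' d O1 O'), <- (PR_same l' d I1 I'), <- (PR_same l' d A1 A'),
        <- (PR_same l' d B1 B'), <- (PR_same l' d X1 X'); auto.
    - apply (TP_par k l' d O1 I1 A1 B1 X1); auto. }
  destruct (classic (pa l l')) as [Hp|Hp]; [apply (Hpar l O I A B X); auto|].
  assert (HO : inc O l) by (destruct PO; auto).
  assert (HI : inc I l) by (destruct PI; auto).
  destruct (ex_par O l') as [k [HOk Hkl']].
  assert (Hkl : k <> l) by (intro; subst; auto).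
  assert (Hdk : ~ pa d k) by (intro; apply Hdl'; eapply par_trans; eauto).
  destruct (PR_ex l k d I Hdk) as [I1 PI1]. auto.
  destruct (PR_ex l k d A Hdk) as [A1 PA1]. destruct PA; auto.
  destruct (PR_ex l k d B Hdk) as [B1 PB1]. destruct PB; auto.
  destruct (PR_ex l k d X Hdk) as [X1 PX1]. destruct PX; auto.
  assert (HS1 := TP_cen l k d O I A B X I1 A1 B1 X1 (not_eq_sym Hkl) HO HOk Hdl Hdk HI HOI PI1 PA1 PB1 PX1 HS).
  assert (POO : PR l k d O O) by (apply PR_both; auto).
  apply (Hpar k O I1 A1 B1 X1); auto.
  - intro E. subst I1. apply HOI. apply (PR_inj l k d O I O); auto.
  - apply (PR_trans l k l' d O O O'); auto.
  - apply (PR_trans l k l' d I I1 I'); auto.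
  - apply (PR_trans l k l' d A A1 A'); auto.
  - apply (PR_trans l k l' d B B1 B'); auto.
  - apply (PR_trans l k l' d X X1 X'); auto.
Qed.

Lemma pick_ex d (Q : Pt -> Prop) : (exists x, Q x) -> Q (pick d Q).
Proof.
  intros H. unfold pick. destruct (excluded_middle_informative _) as [h|h].
  - apply (proj2_sig (constructive_indefinite_description _ h)).
  - contradiction.
Qed.

Lemma pick_nex d (Q : Pt -> Prop) : ~ (exists x, Q x) -> pick d Q = d.
Proof.
  intros H. unfold pick. destruct (excluded_middle_informative _) as [h|h]; auto. contradiction.
Qed.

Lemma pick_in l d (Q : Pt -> Prop) : (forall Y, Q Y -> inc Y l) -> inc d l -> inc (pick d Q) l.
Proof.
  intros H1 H2. destruct (classic (exists x, Q x)) as [E|E].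
  - apply H1, pick_ex, E.
  - rewrite pick_nex; auto.
Qed.

Lemma pick_transport (l1 l2 : Ln) (f : Pt -> Pt) d (Q1 Q2 : Pt -> Prop) :
 (forall P Q, inc P l1 -> inc Q l1 -> f P = f Q -> P = Q) ->
 (forall Y, inc Y l2 -> exists P, inc P l1 /\ f P = Y) ->
 (forall Y, Q1 Y -> inc Y l1) -> (forall Y, Q2 Y -> inc Y l2) ->
 (forall Y, inc Y l1 -> (Q1 Y <-> Q2 (f Y))) ->
 (forall Y Y', Q1 Y -> Q1 Y' -> Y = Y') ->
 f (pick d Q1) = pick (f d) Q2.
Proof.
  intros Hinj Hsurj H1 H2 Hiff Hu.
  destruct (classic (exists x, Q1 x)) as [E|E].
  - assert (HQ1 := pick_ex d Q1 E). set (Y0 := pick d Q1) in *.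
    assert (E2 : exists x, Q2 x) by (exists (f Y0); apply Hiff; auto).
    assert (HQ2 := pick_ex (f d) Q2 E2). set (Y1 := pick (f d) Q2) in *.
    destruct (Hsurj Y1 (H2 _ HQ2)) as [P [HP EP]].
    rewrite <- EP in HQ2. apply Hiff in HQ2; auto.
    rewrite <- EP. f_equal. apply Hu; auto.
  - rewrite (pick_nex d Q1 E). rewrite pick_nex; auto.
    intros [Y HY]. destruct (Hsurj Y (H2 _ HY)) as [P [HP EP]].
    apply E. exists P. apply Hiff; auto. rewrite EP; auto.
Qed.

Section Hom.
Variables (l1 l2 d : Ln) (O I : Pt) (f : Pt -> Pt).
Hypotheses (Hf : forall P, inc P l1 -> PR l1 l2 d P (f P))
  (Hd1 : ~ pa d l1) (Hd2 : ~ pa d l2) (HOI : O <> I) (HO : inc O l1) (HI : inc I l1).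

Lemma f_in P : inc P l1 -> inc (f P) l2.
Proof. intros H; destruct (Hf P H) as (_&?&_); auto. Qed.

Lemma f_inj P Q : inc P l1 -> inc Q l1 -> f P = f Q -> P = Q.
Proof. intros H1 H2 E. apply (PR_inj l1 l2 d P Q (f P)); auto. rewrite E; auto. Qed.

Lemma f_surj Y : inc Y l2 -> exists P, inc P l1 /\ f P = Y.
Proof.
  intros HY. destruct (PR_ex l2 l1 d Y Hd1 HY) as [P HP].
  exists P. split. destruct HP as (_&?&_); auto.
  apply (PR_uniq l1 l2 d P); auto. apply Hf. destruct HP as (_&?&_); auto.
  apply PR_sym; auto.
Qed.

Lemma fOI : f O <> f I.
Proof. intro E; apply HOI; apply f_inj; auto. Qed.

Lemma sadd_in l P A B : inc P l -> inc (sadd inc l P A B) l.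
Proof. intros H. unfold sadd. apply pick_in; auto. intros Y HY; eapply is_sum_l; eauto. Qed.

Lemma smul_in l P Q A B : inc P l -> inc (smul inc l P Q A B) l.
Proof. intros H. unfold smul. apply pick_in; auto. intros Y HY; eapply is_prod_l; eauto. Qed.

Lemma sopp_in l P A : inc P l -> inc (sopp inc l P A) l.
Proof. intros H. unfold sopp. apply pick_in; auto. intros Y HY; apply HY. Qed.

Lemma sinv_in l P Q A : inc P l -> inc (sinv inc l P Q A) l.
Proof. intros H. unfold sinv. apply pick_in; auto. intros Y HY; apply HY. Qed.

Lemma sadd_spec l P A B : inc P l -> inc A l -> inc B l -> is_sum inc l P A B (sadd inc l P A B).
Proof. intros. unfold sadd. apply pick_ex. apply is_sum_ex; auto. Qed.

Lemma smul_spec l P Q A B : inc P l -> inc Q l -> P <> Q -> inc A l -> inc B l ->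
  is_prod inc l P Q A B (smul inc l P Q A B).
Proof. intros. unfold smul. apply pick_ex. apply is_prod_ex; auto. Qed.

Lemma H_add A B : inc A l1 -> inc B l1 ->
  f (sadd inc l1 O A B) = sadd inc l2 (f O) (f A) (f B).
Proof.
  intros HA' HB. unfold sadd. apply (pick_transport l1 l2 f); auto.
  - apply f_inj.
  - apply f_surj.
  - intros Y HY; eapply is_sum_l; eauto.
  - intros Y HY; eapply is_sum_l; eauto.
  - intros Y HY; split; intro H.
    + apply (TS l1 l2 d O A B Y); auto.
    + apply (TS l2 l1 d (f O) (f A) (f B) (f Y)); auto; apply PR_sym; auto.
  - intros Y Y' H1 H2. apply (is_sum_uniq l1 O A B); auto.
Qed.

Lemma H_mul A B : inc A l1 -> inc B l1 ->
  f (smul inc l1 O I A B) = smul inc l2 (f O) (f I) (f A) (f B).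
Proof.
  intros HA' HB. unfold smul. apply (pick_transport l1 l2 f); auto.
  - apply f_inj.
  - apply f_surj.
  - intros Y HY; eapply is_prod_l; eauto.
  - intros Y HY; eapply is_prod_l; eauto.
  - intros Y HY; split; intro H.
    + apply (TP l1 l2 d O I A B Y); auto.
    + apply (TP l2 l1 d (f O) (f I) (f A) (f B) (f Y)); auto; try apply PR_sym; auto.
      apply fOI.
  - intros Y Y' H1 H2. apply (is_prod_uniq l1 O I A B); auto.
Qed.

Lemma H_opp A : inc A l1 -> f (sopp inc l1 O A) = sopp inc l2 (f O) (f A).
Proof.
  intros HA'. unfold sopp. apply (pick_transport l1 l2 f); auto.
  - apply f_inj.
  - apply f_surj.
  - intros Y HY; apply HY.
  - intros Y HY; apply HY.
  - intros Y HY. rewrite <- H_add; auto. split; intros [H1 H2]; split; auto.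
    + apply f_in; auto.
    + rewrite H2; auto.
    + apply f_inj; auto. apply sadd_in; auto.
  - intros Y Y' [H1 H2] [H3 H4]. apply (sum_cancel l1 O A Y Y'); auto.
    + rewrite <- H2 at 2. apply sadd_spec; auto.
    + rewrite <- H4 at 2. apply sadd_spec; auto.
Qed.

Lemma H_inv A : inc A l1 -> f (sinv inc l1 O I A) = sinv inc l2 (f O) (f I) (f A).
Proof.
  intros HA'. unfold sinv. apply (pick_transport l1 l2 f); auto.
  - apply f_inj.
  - apply f_surj.
  - intros Y HY; apply HY.
  - intros Y HY; apply HY.
  - intros Y HY. rewrite <- H_mul; auto. split; intros [H1 H2]; split; auto.
    + apply f_in; auto.
    + rewrite H2; auto.
    + apply f_inj; auto. apply smul_in; auto.
  - intros Y Y' [H1 H2] [H3 H4]. apply (prod_cancel l1 O I A Y Y'); auto.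
    + rewrite <- H2 at 2. apply smul_spec; auto.
    + rewrite <- H4 at 2. apply smul_spec; auto.
Qed.

Lemma H_sub A B : inc A l1 -> inc B l1 -> f (ssub inc l1 O A B) = ssub inc l2 (f O) (f A) (f B).
Proof.
  intros HA' HB. unfold ssub. rewrite H_add; auto. rewrite H_opp; auto. apply sopp_in; auto.
Qed.

Lemma H_ratio A B C : inc A l1 -> inc B l1 -> inc C l1 ->
  f (ratio inc l1 O I A B C) = ratio inc l2 (f O) (f I) (f A) (f B) (f C).
Proof.
  intros HA' HB HC. unfold ratio.
  rewrite H_mul; [| apply sinv_in; auto | unfold ssub; apply sadd_in; auto].
  rewrite H_inv; [| unfold ssub; apply sadd_in; auto].
  rewrite !H_sub; auto.
Qed.

End Hom.
End G.

Theorem mainTheorem12 (Pt Ln : Type) (inc : Pt -> Ln -> Prop)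
  (HA : DesarguesPlane inc) (l1 l2 : Ln) (O I : Pt) (f : Pt -> Pt) :
  O <> I -> inc O l1 -> inc I l1 ->
  parallel_projection inc l1 l2 f ->
  forall A B C : Pt, inc A l1 -> inc B l1 -> inc C l1 -> B <> C ->
  f (ratio inc l1 O I A B C) = ratio inc l2 (f O) (f I) (f A) (f B) (f C).
Proof.
  intros HOI HO HI [Hin [d [Hd Hl]]] A B C HA1 HB1 HC1 _.
  assert (Hf : forall P, inc P l1 -> PR Pt Ln inc l1 l2 d P (f P)).
  { intros P HP. split; [auto|]. split; [auto|]. destruct (Hl P HP) as [m [? [? ?]]]. exists m; auto. }
  assert (Hd2 : ~ par inc d l2).
  { intro Hp. apply Hd.
    assert (G : forall P, inc P l1 -> inc P l2).
    { intros P HP. destruct (Hl P HP) as [m [H1 [H2 H3]]].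
      assert (m = l2).
      { apply (par_inc_eq Pt Ln inc m l2 (f P)); auto.
        apply (par_trans Pt Ln inc HA m d l2); auto. }
      subst; auto. }
    assert (l1 = l2) by (apply (luniq Pt Ln inc HA O I); auto).
    subst; auto. }
  apply (H_ratio Pt Ln inc HA l1 l2 d O I f); auto.
Qed.
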